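(* Let $k_0\in\mathbb{R}\setminus\{0\}$, $N\ge 0$, and real numbers $x_1<\dots<x_N$. Put $I_0=(-\infty,x_1)$, $I_j=(x_j,x_{j+1})$ for $1\le j\le N-1$, $I_N=(x_N,\infty)$ (if $N=0$, $I_0=\mathbb{R}$). Let $w_j:I_j\to\mathbb{C}$, $j=0,\dots,N$, be continuous and piecewise differentiable, and assume: (a) for each $j=1,\dots,N$, the functions $w_j^-(x):=w_{j-1}(x)-\frac{i}{x-x_j}$ on $I_{j-1}$ and $w_j^+(x):=w_j(x)-\frac{i}{x-x_j}$ on $I_j$ are bounded as $x\to x_j-0$ and as $x\to x_j+0$, respectively; (b) $w_0(x)=k_0+\tilde w_{-\infty}(x)$ with $\tilde w_{-\infty}(x)=O(|x|^{-2})$ as $x\to-\infty$, and $w_N(x)=-k_0+\tilde w_{\infty}(x)$ with $\tilde w_\infty(x)=O(|x|^{-2})$ as $x\to+\infty$. Choose arbitrary points $X_j\in I_j$ ($j=0,\dots,N$) and an arbitrary $\rho_0\in\mathbb{C}\setminus\{0\}$, and define recursively for $j=1,\dots,N$ $$\rho_j=\rho_{j-1}\,\frac{X_j-x_j}{X_{j-1}-x_j}\exp\!\Big[i\int_{X_j}^{x_j}w_j^+(\xi)\,d\xi-i\int_{X_{j-1}}^{x_j}w_j^-(\xi)\,d\xi\Big].$$ Define $\psi_0(x)=\rho_j\exp\!\big[-i\int_{X_j}^{x}w_j(\xi)\,d\xi\big]$ for $x\in I_j$, and $\psi_0(x_j)=0$ for $j=1,\dots,N$. Then: (1) $\psi_0\in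 C^1(\mathbb{R})$; (2) there exist nonzero constants $\rho_\pm\in\mathbb{C}$ with $\lim_{x\to\pm\infty}[\psi_0(x)-\rho_\pm e^{\pm ik_0x}]=0$; (3) for each $j$, at every point of $I_j$ where $w_j$ is differentiable, $\psi_0$ satisfies $-\psi_0''+U_j(x)\psi_0=k_0^2\psi_0$ with $U_j(x)=-w_j(x)^2-i\,w_j'(x)+k_0^2$.
   Context: The integrals in the recursion are (convergent) improper integrals up to the endpoint $x_j$. A function with properties (1)–(3) is a spectral-singularity solution of the Schrödinger equation $-\psi''+U\psi=k^2\psi$ at $k=k_0$ with potential $U=-w^2-iw'+k_0^2$ (laser if $k_0>0$, coherent perfect absorber if $k_0<0$). *)

(* Defs.v *)
From Stdlib Require Import Reals Lra Lia List.
Open Scope R_scope.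

Record Cx := mkC { Cre : R; Cim : R }.

Definition RtoC (r : R) : Cx := mkC r 0.
Definition Ci : Cx := mkC 0 1.
Definition Cadd (z w : Cx) : Cx := mkC (Cre z + Cre w) (Cim z + Cim w).
Definition Cneg (z : Cx) : Cx := mkC (- Cre z) (- Cim z).
Definition Csub (z w : Cx) : Cx := Cadd z (Cneg w).
Definition Cmul (z w : Cx) : Cx :=
  mkC (Cre z * Cre w - Cim z * Cim w) (Cre z * Cim w + Cim z * Cre w).
Definition Cinv (z : Cx) : Cx :=
  let d := Cre z * Cre z + Cim z * Cim z in mkC (Cre z / d) (- Cim z / d).
Definition Cdiv (z w : Cx) : Cx := Cmul z (Cinv w).
Definition Cexp (z : Cx) : Cx :=
  mkC (exp (Cre z) * cos (Cim z)) (exp (Cre z) * sin (Cim z)).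
Definition Cnorm (z : Cx) : R := sqrt (Cre z * Cre z + Cim z * Cim z).
Definition C0 : Cx := mkC 0 0.

Definition Ccont_at (f : R -> Cx) (t : R) : Prop :=
  continuity_pt (fun s => Cre (f s)) t /\ continuity_pt (fun s => Cim (f s)) t.
Definition CDeriv (f : R -> Cx) (t : R) (d : Cx) : Prop :=
  derivable_pt_lim (fun s => Cre (f s)) t (Cre d) /\
  derivable_pt_lim (fun s => Cim (f s)) t (Cim d).

Definition CInt (g : R -> Cx) (a b : R) (v : Cx) : Prop :=
  exists (pr1 : Riemann_integrable (fun t => Cre (g t)) a b)
         (pr2 : Riemann_integrable (fun t => Cim (g t)) a b),
    RiemannInt pr1 = Cre v /\ RiemannInt pr2 = Cim v.

Definition between_ho (a b t : R) : Prop :=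
  (a <= t < b) \/ (b < t <= a).

Definition CImpInt (g : R -> Cx) (a b : R) (v : Cx) : Prop :=
  a <> b /\
  (forall t, between_ho a b t -> exists u, CInt g a t u) /\
  (forall eps, 0 < eps -> exists delta, 0 < delta /\
     forall t u, between_ho a b t -> Rabs (t - b) < delta ->
       CInt g a t u -> Cnorm (Csub u v) < eps).

(* The intervals: points x 1 < ... < x N, I_0 = (-oo, x 1),
   I_j = (x j, x (j+1)), I_N = (x N, +oo); if N = 0, I_0 = R. *)
Definition inI (N : nat) (x : nat -> R) (j : nat) (t : R) : Prop :=
  (j = 0%nat \/ x j < t) /\ (j = N \/ t < x (S j)).

Definition wminus (w : nat -> R -> Cx) (x : nat -> R) (j : nat) (t : R) : Cx :=
  Csub (w (j - 1)%nat t) (Cdiv Ci (RtoC (t - x j))).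
Definition wplus (w : nat -> R -> Cx) (x : nat -> R) (j : nat) (t : R) : Cx :=
  Csub (w j t) (Cdiv Ci (RtoC (t - x j))).

Definition Ccont_on_I N x j (f : R -> Cx) : Prop :=
  forall t, inI N x j t -> Ccont_at f t.

Definition Cpw_diff_on_I N x j (f : R -> Cx) : Prop :=
  forall a b, inI N x j a -> inI N x j b -> a <= b ->
    exists l : list R, forall t, a <= t <= b -> ~ In t l ->
      exists d, CDeriv f t d.

(* Main.v *)
Require Import Defs.
From Stdlib Require Import Reals Lra Lia List.
From Stdlib Require Import ClassicalEpsilon.
From Coquelicot Require Import Rcomplements Rbar Hierarchy Continuity Derive RInt AutoDerive RInt_analysis ElemFct.
Open Scope R_scope.


Lemma Cx_eq a b : Cre a = Cre b -> Cim a = Cim b -> a = b.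
Proof. destruct a, b; simpl; intros; subst; reflexivity. Qed.

Lemma Cexp_add a b : Cexp (Cadd a b) = Cmul (Cexp a) (Cexp b).
Proof. apply Cx_eq; simpl; rewrite exp_plus; [rewrite cos_plus | rewrite sin_plus]; ring. Qed.

Lemma Cnorm_pos z : 0 <= Cnorm z.
Proof. apply sqrt_pos. Qed.

Lemma Cnorm_mul a b : Cnorm (Cmul a b) = Cnorm a * Cnorm b.
Proof.
  unfold Cnorm; simpl. rewrite <- sqrt_mult by nra. f_equal. ring.
Qed.

Lemma Rabs_le_sqrt x y : Rabs x <= sqrt (x * x + y * y).
Proof.
  rewrite <- sqrt_Rsqr_abs. apply sqrt_le_1_alt. unfold Rsqr. nra.
Qed.

Lemma Cnorm_re z : Rabs (Cre z) <= Cnorm z.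
Proof. apply Rabs_le_sqrt. Qed.
Lemma Cnorm_im z : Rabs (Cim z) <= Cnorm z.
Proof. unfold Cnorm. rewrite Rplus_comm. apply Rabs_le_sqrt. Qed.

Lemma Cnorm_le_sum z : Cnorm z <= Rabs (Cre z) + Rabs (Cim z).
Proof.
  unfold Cnorm. pose proof (Rabs_pos (Cre z)). pose proof (Rabs_pos (Cim z)).
  rewrite <- (sqrt_Rsqr (Rabs (Cre z) + Rabs (Cim z))) by lra.
  apply sqrt_le_1_alt. unfold Rsqr.
  pose proof (Rsqr_abs (Cre z)). pose proof (Rsqr_abs (Cim z)). unfold Rsqr in *. nra.
Qed.

Lemma Cnorm_exp z : Cnorm (Cexp z) = exp (Cre z).
Proof.
  unfold Cnorm; simpl. pose proof (sin2_cos2 (Cim z)). unfold Rsqr in *.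
  replace (exp (Cre z) * cos (Cim z) * (exp (Cre z) * cos (Cim z)) +
    exp (Cre z) * sin (Cim z) * (exp (Cre z) * sin (Cim z))) with (exp (Cre z) * exp (Cre z)) by nra.
  apply sqrt_square. left; apply exp_pos.
Qed.

Lemma Cnorm_C0 : Cnorm C0 = 0.
Proof. unfold Cnorm; simpl. rewrite Rmult_0_l, Rplus_0_l. apply sqrt_0. Qed.

Lemma Cnorm_zero z : Cnorm z = 0 -> z = C0.
Proof.
  unfold Cnorm; intro H. apply sqrt_eq_0 in H; [|nra].
  apply Cx_eq; simpl; nra.
Qed.

Lemma Cmul_neq0 a b : a <> C0 -> b <> C0 -> Cmul a b <> C0.
Proof.
  intros Ha Hb H. assert (Cnorm (Cmul a b) = 0) by (rewrite H; apply Cnorm_C0).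
  rewrite Cnorm_mul in H0. apply Rmult_integral in H0. destruct H0 as [H0|H0];
  apply Cnorm_zero in H0; auto.
Qed.

Lemma Cexp_neq0 z : Cexp z <> C0.
Proof.
  intro H. assert (Cnorm (Cexp z) = 0) by (rewrite H; apply Cnorm_C0).
  rewrite Cnorm_exp in H0. pose proof (exp_pos (Cre z)). lra.
Qed.

Lemma RtoC_neq0 r : r <> 0 -> RtoC r <> C0.
Proof. intros Hr H. apply Hr. change r with (Cre (RtoC r)). rewrite H. reflexivity. Qed.

Lemma dR_val (f : R -> R) (x l l' : R) : is_derive f x l -> l = l' -> is_derive f x l'.
Proof. intros H ->; exact H. Qed.

Lemma dR_mult (f g : R -> R) (x a b : R) : is_derive f x a -> is_derive g x b ->
  is_derive (fun s => f s * g s) x (a * g x + f x * b).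
Proof. intros Hf Hg. exact (@is_derive_mult R_AbsRing f g x a b Hf Hg Rmult_comm). Qed.

Lemma dR_plus (f g : R -> R) (x a b : R) : is_derive f x a -> is_derive g x b ->
  is_derive (fun s => f s + g s) x (a + b).
Proof. intros Hf Hg. exact (@is_derive_plus R_AbsRing R_NormedModule f g x a b Hf Hg). Qed.

Lemma dR_minus (f g : R -> R) (x a b : R) : is_derive f x a -> is_derive g x b ->
  is_derive (fun s => f s - g s) x (a - b).
Proof. intros Hf Hg. exact (@is_derive_minus R_AbsRing R_NormedModule f g x a b Hf Hg). Qed.

Lemma dR_opp (f : R -> R) (x a : R) : is_derive f x a -> is_derive (fun s => - f s) x (- a).
Proof. intros Hf. exact (@is_derive_opp R_AbsRing R_NormedModule f x a Hf). Qed.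

Lemma dR_const (c x : R) : is_derive (fun _ => c) x 0.
Proof. exact (@is_derive_const R_AbsRing R_NormedModule c x). Qed.

Lemma dR_exp (f : R -> R) (x a : R) : is_derive f x a -> is_derive (fun s => exp (f s)) x (exp (f x) * a).
Proof. intros Hf. eapply dR_val. exact (is_derive_comp exp f x _ a (is_derive_exp (f x)) Hf).
  simpl. unfold scal; simpl; unfold mult; simpl. ring. Qed.

Lemma dR_cos (f : R -> R) (x a : R) : is_derive f x a -> is_derive (fun s => cos (f s)) x (- sin (f x) * a).
Proof. intros Hf. eapply dR_val. exact (is_derive_comp cos f x _ a (is_derive_cos (f x)) Hf).
  simpl. unfold scal; simpl; unfold mult; simpl. ring. Qed.

Lemma dR_sin (f : R -> R) (x a : R) : is_derive f x a -> is_derive (fun s => sin (f s)) x (cos (f x) * a).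
Proof. intros Hf. eapply dR_val. exact (is_derive_comp sin f x _ a (is_derive_sin (f x)) Hf).
  simpl. unfold scal; simpl; unfold mult; simpl. ring. Qed.

Definition CD (f : R -> Cx) t d :=
  is_derive (fun s => Cre (f s)) t (Cre d) /\ is_derive (fun s => Cim (f s)) t (Cim d).

Lemma CD_CDeriv f t d : CD f t d <-> CDeriv f t d.
Proof. unfold CD, CDeriv. rewrite !is_derive_Reals. tauto. Qed.

Lemma CD_val f t d d' : CD f t d -> d = d' -> CD f t d'.
Proof. intros H ->; exact H. Qed.

Lemma CD_mul f g t a b : CD f t a -> CD g t b ->
  CD (fun s => Cmul (f s) (g s)) t (Cadd (Cmul a (g t)) (Cmul (f t) b)).
Proof.
  intros [Hf1 Hf2] [Hg1 Hg2]; split; simpl.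
  - eapply dR_val. apply dR_minus; apply dR_mult; eassumption. cbv beta; ring.
  - eapply dR_val. apply dR_plus; apply dR_mult; eassumption. cbv beta; ring.
Qed.

Lemma CD_add f g t a b : CD f t a -> CD g t b ->
  CD (fun s => Cadd (f s) (g s)) t (Cadd a b).
Proof. intros [Hf1 Hf2] [Hg1 Hg2]; split; simpl; apply dR_plus; assumption. Qed.

Lemma CD_neg f t a : CD f t a -> CD (fun s => Cneg (f s)) t (Cneg a).
Proof. intros [Hf1 Hf2]; split; simpl; apply dR_opp; assumption. Qed.

Lemma CD_const c t : CD (fun _ => c) t C0.
Proof. split; simpl; apply dR_const. Qed.

Lemma CD_exp f t a : CD f t a -> CD (fun s => Cexp (f s)) t (Cmul (Cexp (f t)) a).
Proof.
  intros [Hf1 Hf2]; split; simpl.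
  - eapply dR_val. apply dR_mult. apply dR_exp; eassumption. apply dR_cos; eassumption. cbv beta; ring.
  - eapply dR_val. apply dR_mult. apply dR_exp; eassumption. apply dR_sin; eassumption. cbv beta; ring.
Qed.

Lemma CD_ext_loc f g t d : locally t (fun s => f s = g s) -> CD f t d -> CD g t d.
Proof.
  intros Hl [H1 H2]; split.
  - eapply is_derive_ext_loc; [|exact H1]. eapply filter_imp; [|exact Hl]. intros s ->; reflexivity.
  - eapply is_derive_ext_loc; [|exact H2]. eapply filter_imp; [|exact Hl]. intros s ->; reflexivity.
Qed.

Lemma CD_unique f t d1 d2 : CD f t d1 -> CD f t d2 -> d1 = d2.
Proof.
  intros [H1 H2] [H3 H4]. rewrite is_derive_Reals in *.
  apply Cx_eq; eapply uniqueness_limite; eassumption.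
Qed.


Lemma ballR (x e y : R) : ball x e y <-> Rabs (y - x) < e.
Proof. unfold ball; simpl; unfold AbsRing_ball, abs, minus, plus, opp; simpl. tauto. Qed.

Lemma fl_plus {F : (R -> Prop) -> Prop} {FF : Filter F} (u v : R -> R) a b :
  filterlim u F (locally a) -> filterlim v F (locally b) ->
  filterlim (fun t => u t + v t) F (locally (a + b)).
Proof. intros Hu Hv. exact (filterlim_comp_2 u v Rplus Hu Hv (@filterlim_plus R_AbsRing R_NormedModule a b)). Qed.

Lemma fl_mult {F : (R -> Prop) -> Prop} {FF : Filter F} (u v : R -> R) a b :
  filterlim u F (locally a) -> filterlim v F (locally b) ->
  filterlim (fun t => u t * v t) F (locally (a * b)).
Proof. intros Hu Hv. exact (filterlim_comp_2 u v Rmult Hu Hv (@filterlim_mult R_AbsRing a b)). Qed.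

Lemma fl_opp {F : (R -> Prop) -> Prop} {FF : Filter F} (u : R -> R) a :
  filterlim u F (locally a) -> filterlim (fun t => - u t) F (locally (- a)).
Proof. intros Hu. exact (filterlim_comp _ _ _ u Ropp _ _ _ Hu (@filterlim_opp R_AbsRing R_NormedModule a)). Qed.

Lemma fl_minus {F : (R -> Prop) -> Prop} {FF : Filter F} (u v : R -> R) a b :
  filterlim u F (locally a) -> filterlim v F (locally b) ->
  filterlim (fun t => u t - v t) F (locally (a - b)).
Proof. intros Hu Hv. apply fl_plus; auto. apply fl_opp; auto. Qed.

Lemma fl_cont {F : (R -> Prop) -> Prop} (u : R -> R) (g : R -> R) a :
  continuous g a -> filterlim u F (locally a) -> filterlim (fun t => g (u t)) F (locally (g a)).
Proof. intros Hg Hu. exact (filterlim_comp _ _ _ u g _ _ _ Hu Hg). Qed.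

Lemma fl_const {F : (R -> Prop) -> Prop} {FF : Filter F} (c : R) :
  filterlim (fun _ => c) F (locally c).
Proof. apply filterlim_const. Qed.

Lemma cont_cos x : continuous cos x.
Proof. apply (@ex_derive_continuous R_AbsRing R_NormedModule). eexists. apply is_derive_cos. Qed.
Lemma cont_sin x : continuous sin x.
Proof. apply (@ex_derive_continuous R_AbsRing R_NormedModule). eexists. apply is_derive_sin. Qed.

Definition Clim (F : (R -> Prop) -> Prop) (f : R -> Cx) (L : Cx) :=
  filterlim (fun s => Cre (f s)) F (locally (Cre L)) /\
  filterlim (fun s => Cim (f s)) F (locally (Cim L)).

Lemma Clim_add {F} {FF : Filter F} f g a b : Clim F f a -> Clim F g b ->
  Clim F (fun t => Cadd (f t) (g t)) (Cadd a b).
Proof. intros [H1 H2] [H3 H4]; split; simpl; apply fl_plus; auto. Qed.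

Lemma Clim_neg {F} {FF : Filter F} f a : Clim F f a -> Clim F (fun t => Cneg (f t)) (Cneg a).
Proof. intros [H1 H2]; split; simpl; apply fl_opp; auto. Qed.

Lemma Clim_mul {F} {FF : Filter F} f g a b : Clim F f a -> Clim F g b ->
  Clim F (fun t => Cmul (f t) (g t)) (Cmul a b).
Proof. intros [H1 H2] [H3 H4]; split; simpl.
  apply fl_minus; apply fl_mult; auto. apply fl_plus; apply fl_mult; auto. Qed.

Lemma Clim_const {F} {FF : Filter F} c : Clim F (fun _ => c) c.
Proof. split; apply fl_const. Qed.

Lemma Clim_RtoC {F} {FF : Filter F} u a : filterlim u F (locally a) ->
  Clim F (fun t => RtoC (u t)) (RtoC a).
Proof. intros H; split; simpl; auto. apply fl_const. Qed.

Lemma Clim_exp {F} {FF : Filter F} f a : Clim F f a -> Clim F (fun t => Cexp (f t)) (Cexp a).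
Proof. intros [H1 H2]; split; simpl; apply fl_mult.
  apply fl_cont; auto; apply continuous_exp. apply fl_cont; auto; apply cont_cos.
  apply fl_cont; auto; apply continuous_exp. apply fl_cont; auto; apply cont_sin. Qed.

Lemma Clim_ext_loc {F} {FF : Filter F} f g L : F (fun t => f t = g t) -> Clim F f L -> Clim F g L.
Proof. intros He [H1 H2]; split.
  - eapply filterlim_ext_loc; [|exact H1]. eapply filter_imp; [|exact He]. intros t ->; reflexivity.
  - eapply filterlim_ext_loc; [|exact H2]. eapply filter_imp; [|exact He]. intros t ->; reflexivity.
Qed.

Lemma Clim_norm_1 {F} {FF : Filter F} f L : Clim F f L ->
  forall eps, 0 < eps -> F (fun t => Cnorm (Csub (f t) L) < eps).
Proof.
  intros [H1 H2] eps Heps.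
  rewrite filterlim_locally in H1, H2.
  specialize (H1 (mkposreal (eps/2) ltac:(lra))). specialize (H2 (mkposreal (eps/2) ltac:(lra))).
  generalize (filter_and _ _ H1 H2). apply filter_imp. intros t [Ha Hb].
  rewrite ballR in Ha, Hb. simpl in Ha, Hb.
  eapply Rle_lt_trans. apply Cnorm_le_sum. simpl. unfold Rminus in *. lra.
Qed.

Lemma Clim_norm_2 {F} {FF : Filter F} f L :
  (forall eps, 0 < eps -> F (fun t => Cnorm (Csub (f t) L) < eps)) -> Clim F f L.
Proof.
  intros H; split; apply filterlim_locally; intros [eps Heps];
  (eapply filter_imp; [|apply (H eps Heps)]); intros t Ht; rewrite ballR; simpl.
  - eapply Rle_lt_trans; [|exact Ht]. apply (Cnorm_re (Csub (f t) L)).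
  - eapply Rle_lt_trans; [|exact Ht]. apply (Cnorm_im (Csub (f t) L)).
Qed.

Lemma Csub_C0 z : Csub z C0 = z.
Proof. apply Cx_eq; simpl; ring. Qed.

Lemma Clim_small {F} {FF : Filter F} f r :
  F (fun t => Cnorm (f t) <= r t) -> filterlim r F (locally 0) -> Clim F f C0.
Proof.
  intros Hb Hr. apply Clim_norm_2. intros eps Heps.
  rewrite filterlim_locally in Hr. specialize (Hr (mkposreal eps Heps)).
  generalize (filter_and _ _ Hb Hr). apply filter_imp. intros t [H1 H2].
  rewrite ballR in H2; simpl in H2. rewrite Csub_C0.
  eapply Rle_lt_trans; [exact H1|]. apply Rabs_lt_between in H2. lra.
Qed.

Lemma fl_Cnorm {F} {FF : Filter F} f L : Clim F f L ->
  filterlim (fun t => Cnorm (f t)) F (locally (Cnorm L)).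
Proof.
  intros [H1 H2]. unfold Cnorm. apply fl_cont. apply continuous_sqrt.
  apply fl_plus; apply fl_mult; auto.
Qed.

Lemma Clim_val F f a b : Clim F f a -> a = b -> Clim F f b.
Proof. intros H ->; exact H. Qed.

Lemma Clim_sub_zero {F} {FF : Filter F} f g L : Clim F (fun t => Csub (f t) (g t)) C0 ->
  Clim F g L -> Clim F f L.
Proof.
  intros H1 H2. eapply Clim_ext_loc; [|eapply Clim_val; [apply (Clim_add _ _ _ _ H1 H2)|]].
  apply filter_forall. intros t. apply Cx_eq; simpl; ring.
  apply Cx_eq; simpl; ring.
Qed.

Lemma at_right_intro c (P : R -> Prop) :
  (exists d, 0 < d /\ forall t, c < t < c + d -> P t) -> at_right c P.
Proof.
  intros [d [Hd H]]. exists (mkposreal d Hd). intros t Ht Hct. rewrite ballR in Ht; simpl in Ht.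
  apply H. apply Rabs_lt_between in Ht. lra.
Qed.
Lemma at_left_intro c (P : R -> Prop) :
  (exists d, 0 < d /\ forall t, c - d < t < c -> P t) -> at_left c P.
Proof.
  intros [d [Hd H]]. exists (mkposreal d Hd). intros t Ht Hct. rewrite ballR in Ht; simpl in Ht.
  apply H. apply Rabs_lt_between in Ht. lra.
Qed.
Lemma at_right_elim c (P : R -> Prop) : at_right c P ->
  exists d, 0 < d /\ forall t, c < t < c + d -> P t.
Proof.
  intros [[d Hd] H]. exists d; split; auto. intros t Ht. apply H; [|lra].
  rewrite ballR; simpl. apply Rabs_lt_between. lra.
Qed.
Lemma at_left_elim c (P : R -> Prop) : at_left c P ->
  exists d, 0 < d /\ forall t, c - d < t < c -> P t.
Proof.
  intros [[d Hd] H]. exists d; split; auto. intros t Ht. apply H; [|lra].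
  rewrite ballR; simpl. apply Rabs_lt_between. lra.
Qed.
Lemma locally_intro c (P : R -> Prop) :
  (exists d, 0 < d /\ forall t, c - d < t < c + d -> P t) -> locally c P.
Proof.
  intros [d [Hd H]]. exists (mkposreal d Hd). intros t Ht. rewrite ballR in Ht; simpl in Ht.
  apply H. apply Rabs_lt_between in Ht. lra.
Qed.

Lemma deriv_sides (f : R -> R) c l :
  filterlim (fun t => (f t - f c) / (t - c)) (at_right c) (locally l) ->
  filterlim (fun t => (f t - f c) / (t - c)) (at_left c) (locally l) ->
  derivable_pt_lim f c l.
Proof.
  intros Hr Hl eps Heps.
  pose proof (proj1 (filterlim_locally _ _) Hr) as Hr0. pose proof (proj1 (filterlim_locally _ _) Hl) as Hl0. clear Hr Hl. rename Hr0 into Hr. rename Hl0 into Hl.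
  destruct (at_right_elim _ _ (Hr (mkposreal eps Heps))) as [d1 [Hd1 H1]].
  destruct (at_left_elim _ _ (Hl (mkposreal eps Heps))) as [d2 [Hd2 H2]].
  assert (Hd : 0 < Rmin d1 d2) by (apply Rmin_glb_lt; auto).
  exists (mkposreal _ Hd). intros h Hh Hhd. simpl in Hhd.
  pose proof (Rmin_l d1 d2). pose proof (Rmin_r d1 d2).
  apply Rabs_lt_between in Hhd.
  replace h with ((c + h) - c) at 2 by ring.
  destruct (Rlt_or_le 0 h).
  - specialize (H1 (c + h) ltac:(lra)). rewrite ballR in H1. exact H1.
  - assert (h < 0) by (destruct H3; [auto| contradiction]).
    specialize (H2 (c + h) ltac:(lra)). rewrite ballR in H2. exact H2.
Qed.

Lemma cont_sides (f : R -> R) c :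
  filterlim f (at_right c) (locally (f c)) -> filterlim f (at_left c) (locally (f c)) ->
  filterlim f (locally c) (locally (f c)).
Proof.
  intros Hr Hl. apply filterlim_locally. intros eps. pose proof (proj1 (filterlim_locally _ _) Hr) as Hr0. pose proof (proj1 (filterlim_locally _ _) Hl) as Hl0. clear Hr Hl. rename Hr0 into Hr. rename Hl0 into Hl.
  destruct (at_right_elim _ _ (Hr eps)) as [d1 [Hd1 H1]].
  destruct (at_left_elim _ _ (Hl eps)) as [d2 [Hd2 H2]].
  apply locally_intro. exists (Rmin d1 d2); split. apply Rmin_glb_lt; auto.
  pose proof (Rmin_l d1 d2). pose proof (Rmin_r d1 d2).
  intros t Ht. destruct (Rtotal_order t c) as [Hlt|[Heq|Hgt]].
  - apply H2; lra.
  - subst. apply ball_center.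
  - apply H1; lra.
Qed.


Lemma exR_cont (f : R -> R) a b :
  (forall s, Rmin a b <= s <= Rmax a b -> continuous f s) -> ex_RInt f a b.
Proof. intros H. exact (@ex_RInt_continuous R_CompleteNormedModule f a b H). Qed.

Lemma RInt_chas (f : R -> R) a b c : ex_RInt f a b -> ex_RInt f b c ->
  RInt f a b + RInt f b c = RInt f a c.
Proof. intros H1 H2. exact (@RInt_Chasles R_CompleteNormedModule f a b c H1 H2). Qed.

Lemma RInt_bound (f : R -> R) u v M : ex_RInt f u v ->
  (forall s, Rmin u v <= s <= Rmax u v -> Rabs (f s) <= M) ->
  Rabs (RInt f u v) <= Rabs (v - u) * M.
Proof.
  intros Hex Hb. destruct (Rle_or_lt u v) as [Huv|Huv].
  - rewrite (Rabs_right (v - u)) by lra. apply abs_RInt_le_const; auto.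
    intros t Ht. apply Hb. rewrite Rmin_left, Rmax_right; lra.
  - assert (E : RInt f v u = - RInt f u v) by (rewrite <- (opp_RInt_swap f u v Hex); reflexivity).
    replace (RInt f u v) with (- RInt f v u) by lra.
    rewrite Rabs_Ropp. rewrite (Rabs_left (v - u)) by lra.
    replace (- (v - u)) with (u - v) by ring.
    apply abs_RInt_le_const. lra. apply ex_RInt_swap; auto.
    intros t Ht. apply Hb. rewrite Rmin_right, Rmax_left; lra.
Qed.

Definition Cvx (S : R -> Prop) := forall a b s, S a -> S b -> Rmin a b <= s <= Rmax a b -> S s.

Definition Fint (g : R -> Cx) a t :=
  mkC (RInt (fun s => Cre (g s)) a t) (RInt (fun s => Cim (g s)) a t).

Lemma Ccont_re g s : Ccont_at g s -> continuous (fun u => Cre (g u)) s.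
Proof. intros [H _]. apply continuity_pt_filterlim. exact H. Qed.
Lemma Ccont_im g s : Ccont_at g s -> continuous (fun u => Cim (g u)) s.
Proof. intros [_ H]. apply continuity_pt_filterlim. exact H. Qed.

Lemma exR_seg g a b : (forall s, Rmin a b <= s <= Rmax a b -> Ccont_at g s) ->
  ex_RInt (fun s => Cre (g s)) a b /\ ex_RInt (fun s => Cim (g s)) a b.
Proof.
  intros H; split; apply exR_cont; intros s Hs; [apply Ccont_re|apply Ccont_im]; auto.
Qed.

Lemma exR_on S g a b : Cvx S -> (forall s, S s -> Ccont_at g s) -> S a -> S b ->
  ex_RInt (fun s => Cre (g s)) a b /\ ex_RInt (fun s => Cim (g s)) a b.
Proof. intros Hc Hg Ha Hb. apply exR_seg. intros s Hs. apply Hg. apply (Hc a b s); auto. Qed.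

Lemma CInt_Fint g a b : ex_RInt (fun s => Cre (g s)) a b -> ex_RInt (fun s => Cim (g s)) a b ->
  CInt g a b (Fint g a b).
Proof.
  intros H1 H2. exists (ex_RInt_Reals_0 _ _ _ H1), (ex_RInt_Reals_0 _ _ _ H2).
  simpl. split; symmetry; apply RInt_Reals.
Qed.

Lemma CInt_val g a b v : CInt g a b v -> v = Fint g a b.
Proof.
  intros [p1 [p2 [H1 H2]]]. apply Cx_eq; simpl; [rewrite <- H1|rewrite <- H2]; symmetry; apply RInt_Reals.
Qed.

Lemma Fint_chasles S g a b c : Cvx S -> (forall s, S s -> Ccont_at g s) -> S a -> S b -> S c ->
  Fint g a c = Cadd (Fint g a b) (Fint g b c).
Proof.
  intros Hc Hg Ha Hb Hcc.
  destruct (exR_on S g a b) as [E1 E2]; auto.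
  destruct (exR_on S g b c) as [E3 E4]; auto.
  apply Cx_eq; simpl; symmetry; apply RInt_chas; auto.
Qed.

Lemma CD_Fint S g a t : Cvx S -> locally t S -> (forall s, S s -> Ccont_at g s) -> S a -> S t ->
  CD (Fint g a) t (g t).
Proof.
  intros Hc Hl Hg Ha Ht. split; simpl.
  - apply (is_derive_RInt (fun s => Cre (g s)) (fun b => RInt (fun s => Cre (g s)) a b) a t).
    + eapply filter_imp; [|exact Hl]. intros b Hb. apply (@RInt_correct R_CompleteNormedModule).
      apply (exR_on S g a b); auto.
    + apply Ccont_re; auto.
  - apply (is_derive_RInt (fun s => Cim (g s)) (fun b => RInt (fun s => Cim (g s)) a b) a t).
    + eapply filter_imp; [|exact Hl]. intros b Hb. apply (@RInt_correct R_CompleteNormedModule).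
      apply (exR_on S g a b); auto.
    + apply Ccont_im; auto.
Qed.

Definition gshift (f : R -> Cx) (c : R) (s : R) := Csub (f s) (Cdiv Ci (RtoC (s - c))).

Lemma gshift_re f c s : Cre (gshift f c s) = Cre (f s).
Proof. unfold gshift; simpl. unfold Rdiv. rewrite Ropp_0. ring. Qed.

Lemma gshift_im f c s : Cim (gshift f c s) = Cim (f s) - / (s - c).
Proof.
  unfold gshift; simpl. destruct (Req_dec (s - c) 0) as [H|H].
  - rewrite H. replace (0*0+0*0) with 0 by ring. unfold Rdiv. rewrite Rinv_0. ring.
  - field. auto.
Qed.

Lemma cont_inv_shift c s : s <> c -> continuous (fun u => / (u - c)) s.
Proof.
  intros H. apply (@ex_derive_continuous R_AbsRing R_NormedModule).
  auto_derive. lra.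
Qed.

Lemma Ccont_gshift f c s : Ccont_at f s -> s <> c -> Ccont_at (gshift f c) s.
Proof.
  intros Hf Hs. split; apply continuity_pt_filterlim.
  - change (continuous (fun u => Cre (gshift f c u)) s). eapply continuous_ext. intros u; symmetry; apply gshift_re. apply Ccont_re; auto.
  - change (continuous (fun u => Cim (gshift f c u)) s). eapply continuous_ext. intros u; symmetry; apply gshift_im.
    apply (@continuous_minus R_UniformSpace R_AbsRing R_NormedModule (fun u => Cim (f u)) (fun u => / (u - c))). apply Ccont_im; auto. apply cont_inv_shift; auto.
Qed.

Lemma RInt_inv_shift c a t : (forall s, Rmin a t <= s <= Rmax a t -> 0 < (s - c) / (a - c)) ->
  is_RInt (fun s => / (s - c)) a t (ln ((t - c) / (a - c))).
Proof.
  intros Hpos.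
  assert (Hac : a - c <> 0).
  { intro E. specialize (Hpos a). rewrite E in Hpos. unfold Rdiv in Hpos. rewrite Rinv_0, Rmult_0_r in Hpos.
    assert (Rmin a t <= a <= Rmax a t) by (split; [apply Rmin_l|apply Rmax_l]). specialize (Hpos H). lra. }
  assert (Hs : forall s, Rmin a t <= s <= Rmax a t -> s - c <> 0).
  { intros s Hs E. specialize (Hpos s Hs). rewrite E in Hpos. unfold Rdiv in Hpos. rewrite Rmult_0_l in Hpos. lra. }
  eapply (is_RInt_ext (fun s => / (s - c))). intros; reflexivity.
  replace (ln ((t - c) / (a - c))) with (minus (ln ((t - c) / (a - c))) (ln ((a - c) / (a - c)))).
  apply (@is_RInt_derive R_CompleteNormedModule (fun s => ln ((s - c) / (a - c)))).
  - intros s Hs0. specialize (Hpos s Hs0). specialize (Hs s Hs0).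
    auto_derive. lra. field. split; auto.
  - intros s Hs0. apply cont_inv_shift. specialize (Hs s Hs0). lra.
  - rewrite Rdiv_diag by auto. rewrite ln_1. unfold minus, plus, opp; simpl. ring.
Qed.

Lemma rep_log f c a t : (forall s, Rmin a t <= s <= Rmax a t -> Ccont_at f s /\ 0 < (s - c) / (a - c)) ->
  Cexp (Cneg (Cmul Ci (Fint f a t))) =
  Cmul (RtoC ((t - c) / (a - c))) (Cexp (Cneg (Cmul Ci (Fint (gshift f c) a t)))).
Proof.
  intros H.
  assert (Hpos : forall s, Rmin a t <= s <= Rmax a t -> 0 < (s - c) / (a - c)) by (intros; apply H; auto).
  assert (Hne : forall s, Rmin a t <= s <= Rmax a t -> s <> c).
  { intros s Hs E. specialize (Hpos s Hs). rewrite E in Hpos. unfold Rdiv in Hpos. rewrite Rminus_diag, Rmult_0_l in Hpos. lra. }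
  pose proof (RInt_inv_shift c a t Hpos) as HI.
  assert (Hex : ex_RInt (fun s => / (s - c)) a t) by (eexists; exact HI).
  destruct (exR_seg f a t) as [E1 E2]. intros; apply H; auto.
  destruct (exR_seg (gshift f c) a t) as [E3 E4]. intros; apply Ccont_gshift; auto. apply H; auto.
  assert (Hre : RInt (fun s => Cre (f s)) a t = RInt (fun s => Cre (gshift f c s)) a t).
  { apply RInt_ext. intros; rewrite gshift_re; auto. }
  assert (Him : RInt (fun s => Cim (f s)) a t =
     RInt (fun s => Cim (gshift f c s)) a t + ln ((t - c) / (a - c))).
  { rewrite <- (is_RInt_unique _ _ _ _ HI).
    rewrite (RInt_ext (fun s => Cim (f s)) (fun s => plus (Cim (gshift f c s)) (/ (s - c)))).
    apply (@RInt_plus R_CompleteNormedModule); auto.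
    intros s _. rewrite gshift_im. unfold plus; simpl. ring. }
  assert (Hr : 0 < (t - c) / (a - c)).
  { apply Hpos. split; [apply Rmin_r|apply Rmax_r]. }
  change (Fint f a t) with (mkC (RInt (fun s => Cre (f s)) a t) (RInt (fun s => Cim (f s)) a t)).
  rewrite Hre, Him.
  change (Fint (gshift f c) a t) with (mkC (RInt (fun s => Cre (gshift f c s)) a t) (RInt (fun s => Cim (gshift f c s)) a t)).
  generalize (RInt (fun s => Cre (gshift f c s)) a t) (RInt (fun s => Cim (gshift f c s)) a t).
  intros R1 I1.
  apply Cx_eq; simpl;
  (replace (- (0 * R1 - 1 * (I1 + ln ((t - c) / (a - c))))) with (- (0 * R1 - 1 * I1) + ln ((t - c) / (a - c))) by ring);
  (replace (- (0 * (I1 + ln ((t - c) / (a - c))) + 1 * R1)) with (- (0 * I1 + 1 * R1)) by ring);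
  rewrite exp_plus, exp_ln by auto; ring.
Qed.


Ltac mm := unfold Rmin, Rmax in *;
  repeat match goal with
  | |- context [Rle_dec ?a ?b] => destruct (Rle_dec a b)
  | H : context [Rle_dec ?a ?b] |- _ => destruct (Rle_dec a b)
  end; lra.

Definition Fb a c (P : R -> Prop) :=
  exists d, 0 < d /\ forall t, between_ho a c t -> Rabs (t - c) < d -> P t.

Lemma Fb_filter a c : Filter (Fb a c).
Proof.
  constructor.
  - exists 1; split; [lra|]; auto.
  - intros P Q [d1 [H1 P1]] [d2 [H2 P2]]. exists (Rmin d1 d2); split. apply Rmin_glb_lt; auto.
    intros t Hb Ht. pose proof (Rmin_l d1 d2). pose proof (Rmin_r d1 d2). split; [apply P1|apply P2]; auto; lra.
  - intros P Q HPQ [d [Hd HP]]. exists d; split; auto.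
Qed.

Lemma Fb_proper a c : a <> c -> ProperFilter (Fb a c).
Proof.
  intros Hac. constructor; [|apply Fb_filter].
  intros P [d [Hd HP]].
  destruct (Rlt_or_le a c) as [Hlt|Hle].
  - exists (Rmax a (c - d/2)). apply HP.
    + left. split. apply Rmax_l. apply Rmax_lub_lt; lra.
    + rewrite Rabs_left. 2:{ assert (Rmax a (c - d/2) < c) by (apply Rmax_lub_lt; lra). lra. }
      pose proof (Rmax_r a (c - d/2)). lra.
  - assert (c < a) by (destruct Hle; auto; congruence).
    exists (Rmin a (c + d/2)). apply HP.
    + right. split. apply Rmin_glb_lt; lra. apply Rmin_l.
    + rewrite Rabs_right. 2:{ assert (c < Rmin a (c + d/2)) by (apply Rmin_glb_lt; lra). lra. }
      pose proof (Rmin_r a (c + d/2)). lra.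
Qed.

Lemma between_cvx a c : Cvx (between_ho a c).
Proof. intros u v s Hu Hv Hs. unfold between_ho in *. mm. Qed.

Lemma between_a a c : a <> c -> between_ho a c a.
Proof. intros H. unfold between_ho. lra. Qed.

Lemma cauchy_R {F : (R -> Prop) -> Prop} {PF : ProperFilter F} (f : R -> R) :
  (forall eps, 0 < eps -> exists P, F P /\ forall u v, P u -> P v -> Rabs (f v - f u) < eps) ->
  exists y, filterlim f F (locally y).
Proof.
  intros H. apply (@filterlim_locally_cauchy R R_CompleteSpace F PF f).
  intros [eps Heps]. destruct (H eps Heps) as [P [HP HPuv]]. exists P; split; [exact HP|].
  intros u v Hu Hv. apply ballR. simpl. apply HPuv; auto.
Qed.

Lemma pmR (p q : R) : p + q - p = q.
Proof. ring. Qed.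

Lemma cauchy_part (fr : R -> R) a c M d : a <> c -> 0 < d ->
  (forall t, between_ho a c t -> continuous fr t) ->
  (forall t, between_ho a c t -> Rabs (t - c) < d -> Rabs (fr t) <= M) ->
  exists y, filterlim (fun t => RInt fr a t) (Fb a c) (locally y).
Proof.
  intros Hac Hd Hc Hb. pose proof (Fb_proper a c Hac) as PF.
  apply cauchy_R. intros eps Heps.
  set (M1 := Rabs M + 1).
  assert (HM1 : 0 < M1) by (unfold M1; pose proof (Rabs_pos M); lra).
  set (d' := Rmin d (eps / (2 * M1))).
  assert (Hd' : 0 < d') by (apply Rmin_glb_lt; auto; apply Rdiv_lt_0_compat; lra).
  exists (fun t => between_ho a c t /\ Rabs (t - c) < d'). split.
  - exists d'. split; auto.
  - intros u v [Hu Hu'] [Hv Hv'].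
    assert (Hex : forall p q, between_ho a c p -> between_ho a c q -> ex_RInt fr p q).
    { intros p q Hp Hq. apply exR_cont. intros s Hs. apply Hc. apply (between_cvx a c p q s); auto. }
    assert (Ha := between_a a c Hac).
    rewrite <- (RInt_chas fr a u v) by auto.
    rewrite pmR.
    eapply Rle_lt_trans. apply (RInt_bound fr u v M1); auto.
    + intros s Hs. eapply Rle_trans. apply Hb. apply (between_cvx a c u v s); auto.
      assert (Hdd : d' <= d) by apply Rmin_l. clearbody d'.
      apply Rabs_lt_between in Hu'. apply Rabs_lt_between in Hv'. apply Rabs_lt_between. mm.
      unfold M1. pose proof (Rabs_pos M). pose proof (Rle_abs M). lra.
    + assert (Hd2 : d' <= eps / (2 * M1)) by apply Rmin_r.
      assert (Rabs (v - u) < eps / M1).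
      { apply Rabs_lt_between in Hu'. apply Rabs_lt_between in Hv'. apply Rabs_lt_between.
        assert (eps / M1 = 2 * (eps / (2 * M1))) by (field; lra). lra. }
      apply Rmult_lt_compat_r with (r := M1) in H; auto.
      replace (eps / M1 * M1) with eps in H by (field; lra). exact H.
Qed.

Lemma impint_exists g a c : a <> c ->
  (forall t, between_ho a c t -> Ccont_at g t) ->
  (exists M d, 0 < d /\ forall t, between_ho a c t -> Rabs (t - c) < d -> Cnorm (g t) <= M) ->
  exists A, CImpInt g a c A.
Proof.
  intros Hac Hc [M [d [Hd Hb]]].
  pose proof (Fb_proper a c Hac) as PF.
  destruct (cauchy_part (fun s => Cre (g s)) a c M d) as [yr Hr]; auto.
  { intros t Ht; apply Ccont_re; auto. }
  { intros t Ht Htd. eapply Rle_trans. apply Cnorm_re. auto. }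
  destruct (cauchy_part (fun s => Cim (g s)) a c M d) as [yi Hi]; auto.
  { intros t Ht; apply Ccont_im; auto. }
  { intros t Ht Htd. eapply Rle_trans. apply Cnorm_im. auto. }
  exists (mkC yr yi).
  assert (HL : Clim (Fb a c) (Fint g a) (mkC yr yi)) by (split; assumption).
  assert (Hex : forall t, between_ho a c t -> CInt g a t (Fint g a t)).
  { intros t Ht. destruct (exR_on (between_ho a c) g a t) as [E1 E2]; auto.
    apply between_cvx. apply between_a; auto. apply CInt_Fint; auto. }
  split; [auto|split].
  - intros t Ht. eexists; apply Hex; auto.
  - intros eps Heps. destruct (Clim_norm_1 _ _ HL eps Heps) as [d' [Hd' H']].
    exists d'; split; auto. intros t u Ht Htd Hu. apply CInt_val in Hu. subst u. auto.
Qed.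

Lemma impint_lim g a c A :
  (forall t, between_ho a c t -> Ccont_at g t) -> CImpInt g a c A ->
  Clim (Fb a c) (Fint g a) A.
Proof.
  intros Hc [Hac [_ H]]. pose proof (Fb_filter a c).
  apply Clim_norm_2. intros eps Heps. destruct (H eps Heps) as [d [Hd Hd']].
  exists d; split; auto. intros t Ht Htd. apply (Hd' t); auto.
  destruct (exR_on (between_ho a c) g a t) as [E1 E2]; auto.
  apply between_cvx. apply between_a; auto. apply CInt_Fint; auto.
Qed.

Lemma is_RInt_invsq K u v : 0 < u \/ v < 0 -> u <= v ->
  is_RInt (fun s => K / (s * s)) u v (K * (/ u - / v)).
Proof.
  intros Hs Huv.
  replace (K * (/ u - / v)) with (minus ((fun s => - K / s) v) ((fun s => - K / s) u)).
  apply (@is_RInt_derive R_CompleteNormedModule).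
  - intros s Hs0. rewrite Rmin_left, Rmax_right in Hs0 by lra.
    assert (s <> 0) by lra. auto_derive; auto. field; auto.
  - intros s Hs0. rewrite Rmin_left, Rmax_right in Hs0 by lra.
    assert (s <> 0) by lra. apply (@ex_derive_continuous R_AbsRing R_NormedModule). auto_derive. nra.
  - assert (u <> 0) by lra. assert (v <> 0) by lra. unfold minus, plus, opp; simpl. field; auto.
Qed.

Lemma RInt_tail_le (fr : R -> R) u v K T : 0 < T -> u <= v ->
  ((T <= u) \/ (v <= - T)) ->
  (forall s, u <= s <= v -> continuous fr s) ->
  (forall s, u <= s <= v -> Rabs (fr s) <= K / (s * s)) ->
  Rabs (RInt fr u v) <= Rabs K / T.
Proof.
  intros HT Huv Hside Hc Hb.
  assert (Hs0 : 0 < u \/ v < 0) by lra.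
  assert (Hex : ex_RInt fr u v).
  { apply exR_cont. intros s Hs. apply Hc. rewrite Rmin_left, Rmax_right in Hs; lra. }
  assert (Hexa : ex_RInt (fun s => Rabs (fr s)) u v).
  { apply exR_cont. intros s Hs. apply continuous_Rabs_comp. apply Hc. rewrite Rmin_left, Rmax_right in Hs; lra. }
  eapply Rle_trans. apply abs_RInt_le; auto.
  eapply Rle_trans. apply (RInt_le _ (fun s => K / (s * s))); auto.
  { eexists. apply is_RInt_invsq; auto. }
  { intros s Hs. apply Hb. lra. }
  rewrite (is_RInt_unique _ _ _ _ (is_RInt_invsq K u v Hs0 Huv)).
  assert (u <> 0) by lra. assert (v <> 0) by lra.
  assert (H1 : 0 <= / u - / v <= / T).
  { destruct Hside as [Hs|Hs].
    - assert (0 < u) by lra. assert (/ v <= / u) by (apply Rinv_le_contravar; lra).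
      assert (/ u <= / T) by (apply Rinv_le_contravar; lra). assert (0 < / v) by (apply Rinv_0_lt_compat; lra). lra.
    - replace (/ u - / v) with (/ (- v) - / (- u)) by (rewrite !Rinv_opp; ring).
      assert (/ (- u) <= / (- v)) by (apply Rinv_le_contravar; lra).
      assert (/ (- v) <= / T) by (apply Rinv_le_contravar; lra). assert (0 < / (- u)) by (apply Rinv_0_lt_compat; lra). lra. }
  unfold Rdiv. pose proof (Rle_abs K). pose proof (Rabs_pos K).
  apply Rle_trans with (Rabs K * (/ u - / v)). apply Rmult_le_compat_r; lra.
  apply Rmult_le_compat_l; lra.
Qed.

Lemma RInt_tail (fr : R -> R) u v K T : 0 < T ->
  ((T <= u /\ T <= v) \/ (u <= - T /\ v <= - T)) ->
  (forall s, Rmin u v <= s <= Rmax u v -> continuous fr s) ->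
  (forall s, Rmin u v <= s <= Rmax u v -> Rabs (fr s) <= K / (s * s)) ->
  Rabs (RInt fr u v) <= Rabs K / T.
Proof.
  intros HT Hside Hc Hb. destruct (Rle_or_lt u v) as [Huv|Huv].
  - apply RInt_tail_le; auto. lra.
    intros s Hs; apply Hc; rewrite Rmin_left, Rmax_right; lra.
    intros s Hs; apply Hb; rewrite Rmin_left, Rmax_right; lra.
  - assert (Hex : ex_RInt fr v u).
    { apply exR_cont. intros s Hs. apply Hc. mm. }
    assert (E : RInt fr u v = - RInt fr v u) by (rewrite <- (opp_RInt_swap fr v u Hex); reflexivity).
    rewrite E, Rabs_Ropp. apply RInt_tail_le; auto. lra. lra.
    intros s Hs; apply Hc; mm.
    intros s Hs; apply Hb; mm.
Qed.

Lemma lim_pinf (fr : R -> R) X T K : 0 < T ->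
  (forall s, Rmin X T <= s -> continuous fr s) ->
  (forall s, T <= s -> Rabs (fr s) <= K / (s * s)) ->
  exists y, filterlim (fun t => RInt fr X t) (Rbar_locally p_infty) (locally y).
Proof.
  intros HT Hc Hb. apply (@cauchy_R _ (Rbar_locally_filter p_infty)).
  intros eps Heps.
  set (T1 := Rmax (Rmax X T) (Rabs K / eps + 1)).
  assert (HT1 : T <= T1) by (unfold T1; eapply Rle_trans; [apply Rmax_r|apply Rmax_l]).
  assert (HT1' : Rabs K / eps + 1 <= T1) by (unfold T1; apply Rmax_r).
  assert (HX1 : X <= T1) by (unfold T1; eapply Rle_trans; [apply Rmax_l|apply Rmax_l]).
  exists (fun t => T1 < t). split. exists T1; auto.
  intros u v Hu Hv.
  assert (Hex : forall p q, Rmin X T <= p -> Rmin X T <= q -> ex_RInt fr p q).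
  { intros p q Hp Hq. apply exR_cont. intros s Hs. apply Hc. mm. }
  pose proof (Rmin_l X T).
  rewrite <- (RInt_chas fr X u v) by (apply Hex; lra). rewrite pmR.
  eapply Rle_lt_trans. apply (RInt_tail fr u v K T1); try lra.
  intros s Hs; apply Hc; mm. intros s Hs; apply Hb; mm.
  assert (0 < T1) by lra. pose proof (Rabs_pos K).
  apply Rmult_lt_reg_r with T1; auto. unfold Rdiv. rewrite Rmult_assoc, Rinv_l, Rmult_1_r by lra.
  assert (Rabs K < eps * (Rabs K / eps + 1)) by (field_simplify; lra).
  apply Rlt_le_trans with (eps * (Rabs K / eps + 1)); auto. apply Rmult_le_compat_l; lra.
Qed.

Lemma lim_minf (fr : R -> R) X T K : 0 < T ->
  (forall s, s <= Rmax X (- T) -> continuous fr s) ->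
  (forall s, s <= - T -> Rabs (fr s) <= K / (s * s)) ->
  exists y, filterlim (fun t => RInt fr X t) (Rbar_locally m_infty) (locally y).
Proof.
  intros HT Hc Hb. apply (@cauchy_R _ (Rbar_locally_filter m_infty)).
  intros eps Heps.
  set (T1 := Rmax (Rmax (- X) T) (Rabs K / eps + 1)).
  assert (HT1 : T <= T1) by (unfold T1; eapply Rle_trans; [apply Rmax_r|apply Rmax_l]).
  assert (HT1' : Rabs K / eps + 1 <= T1) by (unfold T1; apply Rmax_r).
  assert (HX1 : - X <= T1) by (unfold T1; eapply Rle_trans; [apply Rmax_l|apply Rmax_l]).
  exists (fun t => t < - T1). split. exists (- T1); auto.
  intros u v Hu Hv.
  assert (Hex : forall p q, p <= Rmax X (- T) -> q <= Rmax X (- T) -> ex_RInt fr p q).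
  { intros p q Hp Hq. apply exR_cont. intros s Hs. apply Hc. mm. }
  pose proof (Rmax_l X (- T)).
  rewrite <- (RInt_chas fr X u v) by (apply Hex; lra). rewrite pmR.
  eapply Rle_lt_trans. apply (RInt_tail fr u v K T1); try lra.
  intros s Hs; apply Hc; mm. intros s Hs; apply Hb; mm.
  assert (0 < T1) by lra. pose proof (Rabs_pos K).
  apply Rmult_lt_reg_r with T1; auto. unfold Rdiv. rewrite Rmult_assoc, Rinv_l, Rmult_1_r by lra.
  assert (Rabs K < eps * (Rabs K / eps + 1)) by (field_simplify; lra).
  apply Rlt_le_trans with (eps * (Rabs K / eps + 1)); auto. apply Rmult_le_compat_l; lra.
Qed.


Lemma inI_cvx N x j : Cvx (inI N x j).
Proof.
  unfold Cvx, inI; intros a b s [Ha1 Ha2] [Hb1 Hb2] Hs; split.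
  - destruct Ha1 as [H|H]; [left; auto|]. destruct Hb1 as [H'|H']; [left; auto|]. right; mm.
  - destruct Ha2 as [H|H]; [left; auto|]. destruct Hb2 as [H'|H']; [left; auto|]. right; mm.
Qed.

Lemma inI_open N x j t : inI N x j t -> locally t (inI N x j).
Proof.
  intros [[H1|H1] [H2|H2]]; apply locally_intro.
  - exists 1; split; [lra|]. intros s _; split; left; auto.
  - exists (x (S j) - t); split; [lra|]. intros s Hs; split; [left; auto|right; lra].
  - exists (t - x j); split; [lra|]. intros s Hs; split; [right; lra|left; auto].
  - exists (Rmin (t - x j) (x (S j) - t)); split. apply Rmin_glb_lt; lra.
    intros s Hs. pose proof (Rmin_l (t - x j) (x (S j) - t)). pose proof (Rmin_r (t - x j) (x (S j) - t)).
    split; right; lra.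
Qed.

Lemma x_mono N (x : nat -> R) : (forall j, (1 <= j < N)%nat -> x j < x (S j)) ->
  forall i k, (1 <= i)%nat -> (i < k)%nat -> (k <= N)%nat -> x i < x k.
Proof.
  intros Hord i k Hi Hik HkN. induction k as [|k IH]. lia.
  destruct (Nat.eq_dec i k) as [->|Hne].
  - apply Hord. lia.
  - apply Rlt_trans with (x k). apply IH; lia. apply Hord; lia.
Qed.

Lemma partition_pts N (x : nat -> R) : (forall j, (1 <= j < N)%nat -> x j < x (S j)) ->
  forall t, (exists j, (j <= N)%nat /\ inI N x j t) \/ (exists j, (1 <= j <= N)%nat /\ t = x j).
Proof.
  intros Hord t. destruct N as [|N'].
  - left. exists 0%nat. split; [lia|]. split; left; auto.
  - assert (Hk : forall k, (1 <= k <= S N')%nat ->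
      t < x 1%nat \/ (exists j, (1 <= j < k)%nat /\ x j <= t < x (S j)) \/ x k <= t).
    { intros k Hk. induction k as [|k IH]. lia.
      destruct (Nat.eq_dec k 0) as [->|Hk0].
      - destruct (Rlt_or_le t (x 1%nat)); [left|right; right]; auto.
      - destruct IH as [H|[H|H]]; try lia.
        + left; auto.
        + right; left. destruct H as [j [Hj1 Hj2]]. exists j; split; [lia|auto].
        + destruct (Rlt_or_le t (x (S k))).
          * right; left. exists k; split; [lia|lra].
          * right; right; auto. }
    destruct (Hk (S N') ltac:(lia)) as [H|[H|H]].
    + left. exists 0%nat. split; [lia|]. split; [left; auto|right; auto].
    + destruct H as [j [Hj [Hj1 Hj2]]]. destruct Hj1 as [Hlt|Heq].
      * left. exists j; split; [lia|]. split; right; auto.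
      * right. exists j; split; [lia|auto].
    + destruct H as [Hlt|Heq].
      * left. exists (S N'); split; [lia|]. split; [right; auto|left; auto].
      * right. exists (S N'); split; [lia|auto].
Qed.

Lemma nb_right N (x : nat -> R) j : (forall j, (1 <= j < N)%nat -> x j < x (S j)) ->
  (1 <= j <= N)%nat -> exists d, 0 < d /\ forall t, x j < t < x j + d -> inI N x j t.
Proof.
  intros Hord Hj. destruct (Nat.eq_dec j N) as [->|Hne].
  - exists 1; split; [lra|]. intros t Ht; split; [right; lra|left; auto].
  - pose proof (Hord j ltac:(lia)). exists (x (S j) - x j); split; [lra|].
    intros t Ht; split; right; lra.
Qed.

Lemma nb_left N (x : nat -> R) j : (forall j, (1 <= j < N)%nat -> x j < x (S j)) ->
  (1 <= j <= N)%nat -> exists d, 0 < d /\ forall t, x j - d < t < x j -> inI N x (j - 1) t.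
Proof.
  intros Hord Hj. assert (E : S (j - 1) = j) by lia.
  destruct (Nat.eq_dec j 1) as [->|Hne].
  - exists 1; split; [lra|]. intros t Ht; split; [left; auto|right; simpl; lra].
  - pose proof (Hord (j - 1)%nat ltac:(lia)) as H. rewrite E in H.
    exists (x j - x (j - 1)%nat); split; [lra|].
    intros t Ht; split; right; [lra|rewrite E; lra].
Qed.

Lemma inI_gt N x j t : (1 <= j)%nat -> inI N x j t -> x j < t.
Proof. intros Hj [[H|H] _]; [lia|auto]. Qed.

Lemma inI_lt N x j t : (j < N)%nat -> inI N x j t -> t < x (S j).
Proof. intros Hj [_ [H|H]]; [lia|auto]. Qed.

Lemma Phi_deriv S g a rho t : Cvx S -> locally t S -> (forall s, S s -> Ccont_at g s) -> S a -> S t ->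
  CD (fun s => Cmul rho (Cexp (Cneg (Cmul Ci (Fint g a s))))) t
     (Cmul (Cneg (Cmul Ci (g t))) (Cmul rho (Cexp (Cneg (Cmul Ci (Fint g a t)))))).
Proof.
  intros Hc Hl Hg Ha Ht.
  eapply CD_val. apply CD_mul. apply CD_const. apply CD_exp. apply CD_neg. apply CD_mul. apply CD_const.
  apply (CD_Fint S); auto.
  apply Cx_eq; simpl; ring.
Qed.

Lemma Clim_le F1 F2 f L : (forall P, F1 P -> F2 P) -> Clim F1 f L -> Clim F2 f L.
Proof. intros Hle [H1 H2]; split; intros P HP; apply Hle; [apply H1|apply H2]; auto. Qed.

Lemma Fb_right a c P : c < a -> Fb a c P -> at_right c P.
Proof.
  intros Hca [d [Hd H]]. apply at_right_intro. exists (Rmin d (a - c)); split.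
  apply Rmin_glb_lt; lra. intros t Ht. pose proof (Rmin_l d (a - c)). pose proof (Rmin_r d (a - c)).
  apply H. right; lra. rewrite Rabs_right; lra.
Qed.

Lemma Fb_left a c P : a < c -> Fb a c P -> at_left c P.
Proof.
  intros Hca [d [Hd H]]. apply at_left_intro. exists (Rmin d (c - a)); split.
  apply Rmin_glb_lt; lra. intros t Ht. pose proof (Rmin_l d (c - a)). pose proof (Rmin_r d (c - a)).
  apply H. left; lra. rewrite Rabs_left; lra.
Qed.

Lemma fl_id_right c : filterlim (fun t => t) (at_right c) (locally c).
Proof.
  apply filterlim_locally. intros [e He]. apply at_right_intro. exists e; split; auto.
  intros t Ht. apply ballR. simpl. apply Rabs_lt_between. lra.
Qed.
Lemma fl_id_left c : filterlim (fun t => t) (at_left c) (locally c).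
Proof.
  apply filterlim_locally. intros [e He]. apply at_left_intro. exists e; split; auto.
  intros t Ht. apply ballR. simpl. apply Rabs_lt_between. lra.
Qed.

Lemma CD_at_point f c D Q1 Q2 : f c = C0 ->
  at_right c (fun t => f t = Cmul (RtoC (t - c)) (Q1 t)) ->
  at_left c (fun t => f t = Cmul (RtoC (t - c)) (Q2 t)) ->
  Clim (at_right c) Q1 D -> Clim (at_left c) Q2 D -> CD f c D.
Proof.
  intros H0 Hr Hl [R1 R2] [L1 L2].
  assert (Er : at_right c (fun t => t <> c)).
  { apply at_right_intro. exists 1; split; [lra|]. intros; lra. }
  assert (El : at_left c (fun t => t <> c)).
  { apply at_left_intro. exists 1; split; [lra|]. intros; lra. }
  split; apply is_derive_Reals; apply deriv_sides; rewrite H0; simpl.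
  - eapply filterlim_ext_loc; [|exact R1]. generalize (filter_and _ _ Hr Er). apply filter_imp.
    intros t [-> Ht]. simpl. field. lra.
  - eapply filterlim_ext_loc; [|exact L1]. generalize (filter_and _ _ Hl El). apply filter_imp.
    intros t [-> Ht]. simpl. field. lra.
  - eapply filterlim_ext_loc; [|exact R2]. generalize (filter_and _ _ Hr Er). apply filter_imp.
    intros t [-> Ht]. simpl. field. lra.
  - eapply filterlim_ext_loc; [|exact L2]. generalize (filter_and _ _ Hl El). apply filter_imp.
    intros t [-> Ht]. simpl. field. lra.
Qed.

Lemma cont_at_point h c : Clim (at_right c) h (h c) -> Clim (at_left c) h (h c) -> Ccont_at h c.
Proof.
  intros [R1 R2] [L1 L2]. split; apply continuity_pt_filterlim; apply cont_sides; auto.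
Qed.

Lemma Clim_cont h t : Clim (locally t) h (h t) -> Ccont_at h t.
Proof. intros [H1 H2]; split; apply continuity_pt_filterlim; auto. Qed.

Lemma Ccont_Clim h t : Ccont_at h t -> Clim (locally t) h (h t).
Proof. intros [H1 H2]; split; apply continuity_pt_filterlim; auto. Qed.

Lemma CD_cont f t d : CD f t d -> Ccont_at f t.
Proof.
  intros [H1 H2]. apply Clim_cont. split.
  - apply (@ex_derive_continuous R_AbsRing R_NormedModule). eexists; exact H1.
  - apply (@ex_derive_continuous R_AbsRing R_NormedModule). eexists; exact H2.
Qed.

Lemma alg_split g Q r : r <> 0 ->
  Cmul (Cneg (Cmul Ci (Cadd g (Cdiv Ci (RtoC r))))) (Cmul (RtoC r) Q) =
  Cadd (Cmul (Cneg (Cmul Ci g)) (Cmul (RtoC r) Q)) Q.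
Proof. intros Hr. apply Cx_eq; simpl; field; auto. Qed.

Lemma dlim_side {F} {FF : Filter F} g Q D c M :
  filterlim (fun t => t) F (locally c) ->
  F (fun t => Cnorm (g t) <= M) -> Clim F Q D ->
  Clim F (fun t => Cadd (Cmul (Cneg (Cmul Ci (g t))) (Cmul (RtoC (t - c)) (Q t))) (Q t)) D.
Proof.
  intros Hid Hb HQ. eapply Clim_val. apply Clim_add; [|exact HQ].
  apply (Clim_small _ (fun t => Rabs M * (Rabs (t - c) * Cnorm (Q t)))).
  - eapply filter_imp; [|exact Hb]. intros t Ht.
    rewrite !Cnorm_mul. unfold Cnorm at 2. simpl.
    unfold Cnorm at 1. simpl.
    replace (- (0 * Cre (g t) - 1 * Cim (g t)) * - (0 * Cre (g t) - 1 * Cim (g t)) +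
       - (0 * Cim (g t) + 1 * Cre (g t)) * - (0 * Cim (g t) + 1 * Cre (g t)))
      with (Cre (g t) * Cre (g t) + Cim (g t) * Cim (g t)) by ring.
    replace ((t - c) * (t - c) + 0 * 0) with (Rsqr (t - c)) by (unfold Rsqr; ring).
    rewrite sqrt_Rsqr_abs. fold (Cnorm (g t)).
    pose proof (Cnorm_pos (g t)). pose proof (Cnorm_pos (Q t)). pose proof (Rabs_pos (t - c)).
    pose proof (Rle_abs M).
    apply Rmult_le_compat_r; [nra|]. lra.
  - assert (HL : filterlim (fun t => Rabs M * (Rabs (t - c) * Cnorm (Q t))) F
        (locally (Rabs M * (Rabs (c - c) * Cnorm D)))).
    2:{ rewrite Rminus_diag, Rabs_R0, Rmult_0_l, Rmult_0_r in HL. exact HL. }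
    apply fl_mult. apply fl_const. apply fl_mult.
    apply (fl_cont (fun t => t - c) Rabs). apply continuous_Rabs.
    apply fl_minus; auto. apply fl_const.
    apply fl_Cnorm; auto.
  - apply Cx_eq; simpl; ring.
Qed.


Lemma inI_seg_up N x j a t : inI N x j a -> (j = 0%nat \/ x j < t) -> t <= a -> inI N x j t.
Proof. intros [H1 H2] H3 H4. split; auto. destruct H2; [left; auto|right; lra]. Qed.

Lemma inI_seg_down N x j a t : inI N x j a -> a <= t -> (j = N \/ t < x (S j)) -> inI N x j t.
Proof. intros [H1 H2] H3 H4. split; auto. destruct H1; [left; auto|right; lra]. Qed.

Lemma inI_unb_right N x a t : inI N x N a -> a <= t -> inI N x N t.
Proof. intros H Ht. apply (inI_seg_down N x N a t H Ht). left; auto. Qed.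

Lemma inI_unb_left N x a t : inI N x 0 a -> t <= a -> inI N x 0 t.
Proof. intros H Ht. apply (inI_seg_up N x 0 a t H). left; auto. auto. Qed.

Lemma Fint_shift g k a t :
  ex_RInt (fun s => Cre (g s)) a t -> ex_RInt (fun s => Cim (g s)) a t ->
  Fint (fun s => Cadd (g s) (RtoC k)) a t = Cadd (Fint g a t) (RtoC (k * (t - a))).
Proof.
  intros E1 E2. apply Cx_eq; unfold Fint; simpl.
  - change (RInt (fun s => plus (Cre (g s)) k) a t = RInt (fun s => Cre (g s)) a t + k * (t - a)).
    rewrite (@RInt_plus R_CompleteNormedModule); auto. rewrite RInt_const.
    unfold plus, scal; simpl. unfold mult; simpl. ring.
    apply ex_RInt_const.
  - rewrite Rplus_0_r. apply RInt_ext. intros; apply Rplus_0_r.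
Qed.

Lemma exp_arith_p G k t X :
  Cexp (Cneg (Cmul Ci (Csub G (RtoC (k * (t - X)))))) =
  Cmul (Cexp (Cmul Ci (RtoC (k * t)))) (Cmul (Cexp (Cneg (Cmul Ci (RtoC (k * X))))) (Cexp (Cneg (Cmul Ci G)))).
Proof. rewrite <- !Cexp_add. f_equal. apply Cx_eq; simpl; ring. Qed.

Lemma exp_arith_m G k t X :
  Cexp (Cneg (Cmul Ci (Csub G (RtoC (- k * (t - X)))))) =
  Cmul (Cexp (Cneg (Cmul Ci (RtoC (k * t))))) (Cmul (Cexp (Cmul Ci (RtoC (k * X)))) (Cexp (Cneg (Cmul Ci G)))).
Proof. rewrite <- !Cexp_add. f_equal. apply Cx_eq; simpl; ring. Qed.

Lemma norm_eit r : Cnorm (Cexp (Cmul Ci (RtoC r))) = 1.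
Proof. rewrite Cnorm_exp. simpl. replace (0 * r - 1 * 0) with 0 by ring. apply exp_0. Qed.
Lemma norm_emit r : Cnorm (Cexp (Cneg (Cmul Ci (RtoC r)))) = 1.
Proof. rewrite Cnorm_exp. simpl. replace (- (0 * r - 1 * 0)) with 0 by ring. apply exp_0. Qed.

Lemma asym_final E P rp eps : Cnorm E = 1 -> Cnorm (Csub P rp) < eps ->
  Cnorm (Csub (Cmul E P) (Cmul rp E)) < eps.
Proof.
  intros H1 H2. replace (Csub (Cmul E P) (Cmul rp E)) with (Cmul E (Csub P rp)).
  rewrite Cnorm_mul, H1, Rmult_1_l; auto. apply Cx_eq; simpl; ring.
Qed.

Lemma rep_alg rho t c a E : a - c <> 0 ->
  Cmul rho (Cmul (RtoC ((t - c) / (a - c))) E) =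
  Cmul (RtoC (t - c)) (Cmul rho (Cmul (RtoC (/ (a - c))) E)).
Proof. intros H. apply Cx_eq; simpl; field; auto. Qed.

Lemma D_eq rhoj rhojm A B Xj Xjm c : Xj - c <> 0 -> Xjm - c <> 0 ->
  rhoj = Cmul (Cmul rhojm (RtoC ((Xj - c) / (Xjm - c)))) (Cexp (Csub (Cmul Ci A) (Cmul Ci B))) ->
  Cmul rhoj (Cmul (RtoC (/ (Xj - c))) (Cexp (Cneg (Cmul Ci A)))) =
  Cmul rhojm (Cmul (RtoC (/ (Xjm - c))) (Cexp (Cneg (Cmul Ci B)))).
Proof.
  intros H1 H2 ->.
  assert (HE : Cmul (Cexp (Csub (Cmul Ci A) (Cmul Ci B))) (Cexp (Cneg (Cmul Ci A))) = Cexp (Cneg (Cmul Ci B))).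
  { rewrite <- Cexp_add. f_equal. apply Cx_eq; simpl; ring. }
  rewrite <- HE. generalize (Cexp (Csub (Cmul Ci A) (Cmul Ci B))) (Cexp (Cneg (Cmul Ci A))).
  intros [e1 e2] [f1 f2]. destruct rhojm. apply Cx_eq; simpl; field; auto.
Qed.

Lemma w_decomp (f : R -> Cx) c t : f t = Cadd (gshift f c t) (Cdiv Ci (RtoC (t - c))).
Proof. apply Cx_eq; unfold gshift; simpl; ring. Qed.


Theorem theorem2
  (k0 : R) (N : nat) (x : nat -> R) (w : nat -> R -> Cx)
  (X : nat -> R) (rho0 : Cx) :
  k0 <> 0 ->
  (forall j, (1 <= j < N)%nat -> x j < x (S j)) ->
  (forall j, (j <= N)%nat -> Ccont_on_I N x j (w j)) ->
  (forall j, (j <= N)%nat -> Cpw_diff_on_I N x j (w j)) ->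
  (* (a) boundedness of w_j^- near x_j from the left, w_j^+ from the right *)
  (forall j, (1 <= j <= N)%nat ->
     exists M delta, 0 < delta /\
       forall t, inI N x (j - 1) t -> x j - delta < t ->
         Cnorm (wminus w x j t) <= M) ->
  (forall j, (1 <= j <= N)%nat ->
     exists M delta, 0 < delta /\
       forall t, inI N x j t -> t < x j + delta ->
         Cnorm (wplus w x j t) <= M) ->
  (* (b) asymptotics at -oo and +oo *)
  (exists K R0, forall t, inI N x 0 t -> t <= R0 ->
       Cnorm (Csub (w 0%nat t) (RtoC k0)) <= K / (t * t)) ->
  (exists K R0, forall t, inI N x N t -> R0 <= t ->
       Cnorm (Csub (w N t) (RtoC (- k0))) <= K / (t * t)) ->
  (* arbitrary X_j in I_j and rho_0 <> 0 *)
  (forall j, (j <= N)%nat -> inI N x j (X j)) ->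
  rho0 <> C0 ->
  (* the improper integrals in the recursion converge *)
  ((forall j, (1 <= j <= N)%nat ->
      exists A, CImpInt (wplus w x j) (X j) (x j) A) /\
   (forall j, (1 <= j <= N)%nat ->
      exists B, CImpInt (wminus w x j) (X (j - 1)%nat) (x j) B)) /\
  (forall (A B : nat -> Cx) (rho : nat -> Cx) (psi0 : R -> Cx),
     (forall j, (1 <= j <= N)%nat -> CImpInt (wplus w x j) (X j) (x j) (A j)) ->
     (forall j, (1 <= j <= N)%nat ->
        CImpInt (wminus w x j) (X (j - 1)%nat) (x j) (B j)) ->
     rho 0%nat = rho0 ->
     (forall j, (1 <= j <= N)%nat ->
        rho j = Cmul (Cmul (rho (j - 1)%nat)
                           (RtoC ((X j - x j) / (X (j - 1)%nat - x j))))
                     (Cexp (Csub (Cmul Ci (A j)) (Cmul Ci (B j))))) ->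
     (forall j t v, (j <= N)%nat -> inI N x j t -> CInt (w j) (X j) t v ->
        psi0 t = Cmul (rho j) (Cexp (Cneg (Cmul Ci v)))) ->
     (forall j, (1 <= j <= N)%nat -> psi0 (x j) = C0) ->
     (* (1) psi0 is C^1 on R, and (3) the Schroedinger equation *)
     (exists dpsi : R -> Cx,
        (forall t, CDeriv psi0 t (dpsi t)) /\
        (forall t, Ccont_at dpsi t) /\
        (forall j t dw, (j <= N)%nat -> inI N x j t -> CDeriv (w j) t dw ->
           let U := Cadd (Csub (Cneg (Cmul (w j t) (w j t))) (Cmul Ci dw))
                         (RtoC (k0 * k0)) in
           exists d2 : Cx, CDeriv dpsi t d2 /\
             Cadd (Cneg d2) (Cmul U (psi0 t)) = Cmul (RtoC (k0 * k0)) (psi0 t))) /\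
     (* (2) asymptotics of psi0 *)
     (exists rhop rhom : Cx, rhop <> C0 /\ rhom <> C0 /\
        (forall eps, 0 < eps -> exists M, forall t, M < t ->
           Cnorm (Csub (psi0 t) (Cmul rhop (Cexp (Cmul Ci (RtoC (k0 * t)))))) < eps) /\
        (forall eps, 0 < eps -> exists M, forall t, t < M ->
           Cnorm (Csub (psi0 t) (Cmul rhom (Cexp (Cneg (Cmul Ci (RtoC (k0 * t)))))))
             < eps))).
Proof.
  intros Hk0 Hord Hcont Hpw Hbm Hbp Hasm Hasp HX Hrho0.
  assert (HXgt : forall j, (1 <= j <= N)%nat -> x j < X j).
  { intros j Hj. apply (inI_gt N x j); [lia|]. apply HX; lia. }
  assert (HXlt : forall j, (1 <= j <= N)%nat -> X (j - 1)%nat < x j).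
  { intros j Hj. replace j with (S (j - 1)) at 2 by lia. apply (inI_lt N x (j - 1)); [lia|]. apply HX; lia. }
  assert (HbetP : forall j t, (1 <= j <= N)%nat -> between_ho (X j) (x j) t -> inI N x j t /\ x j < t).
  { intros j t Hj Hb. pose proof (HXgt j Hj). destruct Hb as [Hb|Hb]; [lra|].
    split; [|lra]. apply (inI_seg_up N x j (X j) t); [apply HX; lia|right; lra|lra]. }
  assert (HbetM : forall j t, (1 <= j <= N)%nat -> between_ho (X (j - 1)%nat) (x j) t -> inI N x (j - 1) t /\ t < x j).
  { intros j t Hj Hb. pose proof (HXlt j Hj). destruct Hb as [Hb|Hb]; [|lra].
    split; [|lra]. apply (inI_seg_down N x (j - 1) (X (j - 1)%nat) t); [apply HX; lia|lra|].
    right. replace (S (j - 1)) with j by lia. lra. }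
  assert (HcontP : forall j, (1 <= j <= N)%nat -> forall t, between_ho (X j) (x j) t -> Ccont_at (wplus w x j) t).
  { intros j Hj t Ht. destruct (HbetP j t Hj Ht) as [H1 H2].
    apply (Ccont_gshift (w j) (x j) t). apply Hcont; auto; lia. lra. }
  assert (HcontM : forall j, (1 <= j <= N)%nat -> forall t, between_ho (X (j - 1)%nat) (x j) t -> Ccont_at (wminus w x j) t).
  { intros j Hj t Ht. destruct (HbetM j t Hj Ht) as [H1 H2].
    apply (Ccont_gshift (w (j - 1)%nat) (x j) t). apply Hcont; auto; lia. lra. }
  split.
  { split; intros j Hj.
    - apply impint_exists. pose proof (HXgt j Hj); lra. apply HcontP; auto.
      destruct (Hbp j Hj) as [M [d [Hd HM]]]. exists M, d; split; auto.
      intros t Ht Htd. destruct (HbetP j t Hj Ht) as [H1 H2]. apply HM; auto.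
      apply Rabs_lt_between in Htd. lra.
    - apply impint_exists. pose proof (HXlt j Hj); lra. apply HcontM; auto.
      destruct (Hbm j Hj) as [M [d [Hd HM]]]. exists M, d; split; auto.
      intros t Ht Htd. destruct (HbetM j t Hj Ht) as [H1 H2]. apply HM; auto.
      apply Rabs_lt_between in Htd. lra. }
  intros A B rho psi0 HA HB Hr0 Hrec Hpsi Hpsix.
  assert (Hpsi' : forall j t, (j <= N)%nat -> inI N x j t ->
            psi0 t = Cmul (rho j) (Cexp (Cneg (Cmul Ci (Fint (w j) (X j) t))))).
  { intros j t Hj Ht. apply (Hpsi j); auto.
    destruct (exR_on (inI N x j) (w j) (X j) t) as [E1 E2]; auto.
    apply inI_cvx. apply Hcont; auto. apply CInt_Fint; auto. }
  assert (HD : forall j t, (j <= N)%nat -> inI N x j t ->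
            CD psi0 t (Cmul (Cneg (Cmul Ci (w j t))) (psi0 t))).
  { intros j t Hj Ht. eapply CD_val. eapply CD_ext_loc.
    2: apply (Phi_deriv (inI N x j) (w j) (X j) (rho j) t); auto.
    - eapply filter_imp; [|apply (inI_open N x j t Ht)]. intros s Hs. symmetry; apply Hpsi'; auto.
    - apply inI_cvx.
    - apply inI_open; auto.
    - apply Hcont; auto.
    - rewrite (Hpsi' j t); auto. }
  assert (Hrnz : forall j, (j <= N)%nat -> rho j <> C0).
  { induction j as [|j IH]; intros Hj. rewrite Hr0; auto.
    rewrite Hrec by lia. replace (S j - 1)%nat with j by lia.
    apply Cmul_neq0; [apply Cmul_neq0|apply Cexp_neq0]. apply IH; lia.
    apply RtoC_neq0. pose proof (HXgt (S j) ltac:(lia)). pose proof (HXlt (S j) ltac:(lia)).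
    replace (S j - 1)%nat with j in H0 by lia.
    unfold Rdiv. apply Rmult_integral_contrapositive; split; [lra|]. apply Rinv_neq_0_compat; lra. }
  assert (Hpt : forall j, (1 <= j <= N)%nat ->
    CD psi0 (x j) (Cmul (rho j) (Cmul (RtoC (/ (X j - x j))) (Cexp (Cneg (Cmul Ci (A j)))))) /\
    Clim (at_right (x j)) (fun t => Cmul (Cneg (Cmul Ci (w j t))) (psi0 t))
      (Cmul (rho j) (Cmul (RtoC (/ (X j - x j))) (Cexp (Cneg (Cmul Ci (A j)))))) /\
    Clim (at_left (x j)) (fun t => Cmul (Cneg (Cmul Ci (w (j - 1)%nat t))) (psi0 t))
      (Cmul (rho j) (Cmul (RtoC (/ (X j - x j))) (Cexp (Cneg (Cmul Ci (A j))))))).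
  { intros j Hj.
    destruct (nb_right N x j Hord Hj) as [dR [HdR HR]].
    destruct (nb_left N x j Hord Hj) as [dL [HdL HL]].
    pose proof (HXgt j Hj) as Hgt. pose proof (HXlt j Hj) as Hlt.
    pose (Q1 := fun t => Cmul (rho j) (Cmul (RtoC (/ (X j - x j))) (Cexp (Cneg (Cmul Ci (Fint (wplus w x j) (X j) t)))))).
    pose (Q2 := fun t => Cmul (rho (j - 1)%nat) (Cmul (RtoC (/ (X (j - 1)%nat - x j))) (Cexp (Cneg (Cmul Ci (Fint (wminus w x j) (X (j - 1)%nat) t)))))).
    assert (HR1 : forall t, inI N x j t -> psi0 t = Cmul (RtoC (t - x j)) (Q1 t)).
    { intros t Ht. rewrite (Hpsi' j t) by (auto; lia). rewrite (rep_log (w j) (x j) (X j) t).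
      - unfold Q1. apply rep_alg. lra.
      - intros s Hs. assert (Hs' : inI N x j s) by (apply (inI_cvx N x j (X j) t s); auto; apply HX; lia).
        split. apply Hcont; auto; lia. apply Rdiv_lt_0_compat; [|lra].
        pose proof (inI_gt N x j s ltac:(lia) Hs'); lra. }
    assert (HL2 : forall t, inI N x (j - 1) t -> psi0 t = Cmul (RtoC (t - x j)) (Q2 t)).
    { intros t Ht. rewrite (Hpsi' (j - 1)%nat t) by (auto; lia). rewrite (rep_log (w (j - 1)%nat) (x j) (X (j - 1)%nat) t).
      - unfold Q2. apply rep_alg. lra.
      - intros s Hs. assert (Hs' : inI N x (j - 1) s) by (apply (inI_cvx N x (j - 1) (X (j - 1)%nat) t s); auto; apply HX; lia).
        split. apply Hcont; auto; lia.
        pose proof (inI_lt N x (j - 1) s ltac:(lia) Hs') as Hsl. replace (S (j - 1)) with j in Hsl by lia.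
        replace ((s - x j) / (X (j - 1)%nat - x j)) with ((x j - s) / (x j - X (j - 1)%nat)) by (field; lra).
        apply Rdiv_lt_0_compat; lra. }
    assert (HF1 : Clim (at_right (x j)) (Fint (wplus w x j) (X j)) (A j)).
    { apply (Clim_le (Fb (X j) (x j))). intros P; apply Fb_right; auto.
      apply impint_lim. apply HcontP; auto. apply HA; auto. }
    assert (HF2 : Clim (at_left (x j)) (Fint (wminus w x j) (X (j - 1)%nat)) (B j)).
    { apply (Clim_le (Fb (X (j - 1)%nat) (x j))). intros P; apply Fb_left; auto.
      apply impint_lim. apply HcontM; auto. apply HB; auto. }
    assert (HQ1 : Clim (at_right (x j)) Q1 (Cmul (rho j) (Cmul (RtoC (/ (X j - x j))) (Cexp (Cneg (Cmul Ci (A j))))))).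
    { unfold Q1. apply Clim_mul. apply Clim_const. apply Clim_mul. apply Clim_const.
      apply Clim_exp. apply Clim_neg. apply Clim_mul. apply Clim_const. exact HF1. }
    assert (HQ2 : Clim (at_left (x j)) Q2 (Cmul (rho (j - 1)%nat) (Cmul (RtoC (/ (X (j - 1)%nat - x j))) (Cexp (Cneg (Cmul Ci (B j))))))).
    { unfold Q2. apply Clim_mul. apply Clim_const. apply Clim_mul. apply Clim_const.
      apply Clim_exp. apply Clim_neg. apply Clim_mul. apply Clim_const. exact HF2. }
    assert (HDeq : Cmul (rho j) (Cmul (RtoC (/ (X j - x j))) (Cexp (Cneg (Cmul Ci (A j))))) =
                   Cmul (rho (j - 1)%nat) (Cmul (RtoC (/ (X (j - 1)%nat - x j))) (Cexp (Cneg (Cmul Ci (B j)))))).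
    { apply D_eq; [lra|lra|]. apply Hrec; auto. }
    rewrite <- HDeq in HQ2.
    assert (HevR : at_right (x j) (fun t => inI N x j t /\ t <> x j)).
    { apply at_right_intro. exists dR; split; auto. intros t Ht; split; [apply HR; auto|lra]. }
    assert (HevL : at_left (x j) (fun t => inI N x (j - 1) t /\ t <> x j)).
    { apply at_left_intro. exists dL; split; auto. intros t Ht; split; [apply HL; auto|lra]. }
    split; [|split].
    - apply (CD_at_point psi0 (x j) _ Q1 Q2); auto.
      + eapply filter_imp; [|exact HevR]. intros t [Ht _]; auto.
      + eapply filter_imp; [|exact HevL]. intros t [Ht _]; auto.
    - destruct (Hbp j Hj) as [M [d [Hd HM]]].
      assert (Hb : at_right (x j) (fun t => Cnorm (wplus w x j t) <= M)).
      { apply at_right_intro. exists (Rmin d dR); split. apply Rmin_glb_lt; auto.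
        intros t Ht. pose proof (Rmin_l d dR). pose proof (Rmin_r d dR). apply HM; [apply HR|]; lra. }
      eapply Clim_ext_loc; [|apply (dlim_side (wplus w x j) Q1 _ (x j) M (fl_id_right _) Hb HQ1)].
      eapply filter_imp; [|exact HevR]. intros t [Ht Hne].
      rewrite (HR1 t Ht). rewrite (w_decomp (w j) (x j) t). rewrite alg_split by lra. reflexivity.
    - destruct (Hbm j Hj) as [M [d [Hd HM]]].
      assert (Hb : at_left (x j) (fun t => Cnorm (wminus w x j t) <= M)).
      { apply at_left_intro. exists (Rmin d dL); split. apply Rmin_glb_lt; auto.
        intros t Ht. pose proof (Rmin_l d dL). pose proof (Rmin_r d dL). apply HM; [apply HL|]; lra. }
      eapply Clim_ext_loc; [|apply (dlim_side (wminus w x j) Q2 _ (x j) M (fl_id_left _) Hb HQ2)].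
      eapply filter_imp; [|exact HevL]. intros t [Ht Hne].
      rewrite (HL2 t Ht). rewrite (w_decomp (w (j - 1)%nat) (x j) t). rewrite alg_split by lra. reflexivity. }
  pose (dpsi := fun t => epsilon (inhabits C0) (fun d => CD psi0 t d)).
  assert (Hdp : forall t d, CD psi0 t d -> dpsi t = d).
  { intros t d Hd. apply (CD_unique psi0 t). unfold dpsi. apply (epsilon_spec (inhabits C0) (fun d => CD psi0 t d)).
    exists d; auto. auto. }
  assert (HdI : forall j t, (j <= N)%nat -> inI N x j t -> dpsi t = Cmul (Cneg (Cmul Ci (w j t))) (psi0 t)).
  { intros j t Hj Ht. apply Hdp. apply HD; auto. }
  split.
  { exists dpsi. split; [|split].
  - intros t. apply CD_CDeriv. destruct (partition_pts N x Hord t) as [[j [Hj Ht]]|[j [Hj ->]]].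
    + rewrite (HdI j t Hj Ht). apply HD; auto.
    + destruct (Hpt j Hj) as [H1 _]. rewrite (Hdp _ _ H1). exact H1.
  - intros t. destruct (partition_pts N x Hord t) as [[j [Hj Ht]]|[j [Hj ->]]].
    + apply Clim_cont. rewrite (HdI j t Hj Ht).
      eapply Clim_ext_loc; [|apply Clim_mul; [apply Clim_neg; apply Clim_mul; [apply Clim_const|apply Ccont_Clim; apply Hcont; eauto]
                                            |apply Ccont_Clim; eapply CD_cont; apply (HD j t Hj Ht)]].
      eapply filter_imp; [|apply (inI_open N x j t Ht)]. intros s Hs. symmetry; apply HdI; auto.
    + destruct (Hpt j Hj) as [H1 [H2 H3]]. rewrite <- (Hdp _ _ H1) in H2, H3.
      destruct (nb_right N x j Hord Hj) as [dR [HdR HR]].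
      destruct (nb_left N x j Hord Hj) as [dL [HdL HL]].
      apply cont_at_point.
      * eapply Clim_ext_loc; [|exact H2]. apply at_right_intro. exists dR; split; auto.
        intros t Ht. symmetry; apply HdI; auto. lia.
      * eapply Clim_ext_loc; [|exact H3]. apply at_left_intro. exists dL; split; auto.
        intros t Ht. symmetry; apply (HdI (j - 1)%nat); auto. lia.
  - intros j t dw Hj Ht Hdw. cbv zeta.
    exists (Cadd (Cmul (Cneg (Cadd (Cmul C0 (w j t)) (Cmul Ci dw))) (psi0 t))
                 (Cmul (Cneg (Cmul Ci (w j t))) (Cmul (Cneg (Cmul Ci (w j t))) (psi0 t)))).
    split.
    + apply CD_CDeriv. apply (CD_ext_loc (fun s => Cmul (Cneg (Cmul Ci (w j s))) (psi0 s))).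
      * eapply filter_imp; [|apply (inI_open N x j t Ht)]. intros s Hs. symmetry; apply HdI; auto.
      * eapply CD_val. apply (CD_mul (fun s => Cneg (Cmul Ci (w j s))) psi0).
        apply (CD_neg (fun s => Cmul Ci (w j s))). apply (CD_mul (fun _ => Ci) (w j)). apply CD_const.
        apply CD_CDeriv; exact Hdw. apply (HD j t Hj Ht). reflexivity.
    + apply Cx_eq; simpl; ring. }
  assert (HinN : forall t, x N < t -> inI N x N t).
  { intros t Ht. split; [right; auto|left; auto]. }
  assert (Hin0 : forall t, t < x 1%nat -> inI N x 0 t).
  { intros t Ht. split; [left; auto|right; auto]. }
  destruct Hasp as [Kp [Rp HKp]]. destruct Hasm as [Km [Rm HKm]].
  pose (wt := fun s => Cadd (w N s) (RtoC k0)).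
  pose (wm := fun s => Cadd (w 0%nat s) (RtoC (- k0))).
  assert (HXN : inI N x N (X N)) by (apply HX; lia).
  assert (HX0 : inI N x 0 (X 0%nat)) by (apply HX; lia).
  assert (Hcwt : forall s, X N <= s -> Ccont_at wt s).
  { intros s Hs. apply Clim_cont. apply Clim_add. apply Ccont_Clim. apply Hcont; auto.
    apply (inI_unb_right N x (X N)); auto. apply Clim_const. }
  assert (Hcwm : forall s, s <= X 0%nat -> Ccont_at wm s).
  { intros s Hs. apply Clim_cont. apply Clim_add. apply Ccont_Clim. apply Hcont; auto. lia.
    apply (inI_unb_left N x (X 0%nat)); auto. apply Clim_const. }
  pose (Tp := Rmax (Rmax Rp 1) (X N)).
  assert (HTp1 : 1 <= Tp) by (unfold Tp; eapply Rle_trans; [apply Rmax_r|apply Rmax_l]).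
  assert (HTpR : Rp <= Tp) by (unfold Tp; eapply Rle_trans; [apply Rmax_l|apply Rmax_l]).
  assert (HTpX : X N <= Tp) by (unfold Tp; apply Rmax_r).
  assert (HbP : forall s, Tp <= s -> Cnorm (Csub (w N s) (RtoC (- k0))) <= Kp / (s * s)).
  { intros s Hs. apply HKp; [|lra]. apply (inI_unb_right N x (X N)); auto; lra. }
  assert (HminP : Rmin (X N) Tp = X N) by (apply Rmin_left; lra).
  assert (C1yr : forall s, Rmin (X N) Tp <= s -> continuous (fun s => Cre (wt s)) s).
  { intros s Hs. rewrite HminP in Hs. apply Ccont_re. apply Hcwt; auto. }
  assert (C2yr : forall s, Tp <= s -> Rabs ((fun s => Cre (wt s)) s) <= Kp / (s * s)).
  { intros s Hs. eapply Rle_trans; [|apply HbP; auto]. 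
    replace (Cre (wt s)) with (Cre (Csub (w N s) (RtoC (- k0)))) by (unfold wt; simpl; ring).
    apply Cnorm_re. }
  destruct (lim_pinf (fun s => Cre (wt s)) (X N) Tp Kp ltac:(lra) C1yr C2yr) as [yr Hyr].
  assert (C1yi : forall s, Rmin (X N) Tp <= s -> continuous (fun s => Cim (wt s)) s).
  { intros s Hs. rewrite HminP in Hs. apply Ccont_im. apply Hcwt; auto. }
  assert (C2yi : forall s, Tp <= s -> Rabs ((fun s => Cim (wt s)) s) <= Kp / (s * s)).
  { intros s Hs. eapply Rle_trans; [|apply HbP; auto].
    replace (Cim (wt s)) with (Cim (Csub (w N s) (RtoC (- k0)))) by (unfold wt; simpl; ring).
    apply Cnorm_im. }
  destruct (lim_pinf (fun s => Cim (wt s)) (X N) Tp Kp ltac:(lra) C1yi C2yi) as [yi Hyi].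
  pose (Tm := Rmax (Rmax (- Rm) 1) (- X 0%nat)).
  assert (HTm1 : 1 <= Tm) by (unfold Tm; eapply Rle_trans; [apply Rmax_r|apply Rmax_l]).
  assert (HTmR : - Rm <= Tm) by (unfold Tm; eapply Rle_trans; [apply Rmax_l|apply Rmax_l]).
  assert (HTmX : - X 0%nat <= Tm) by (unfold Tm; apply Rmax_r).
  assert (HbM : forall s, s <= - Tm -> Cnorm (Csub (w 0%nat s) (RtoC k0)) <= Km / (s * s)).
  { intros s Hs. apply HKm; [|lra]. apply (inI_unb_left N x (X 0%nat)); auto; lra. }
  assert (HmaxM : Rmax (X 0%nat) (- Tm) = X 0%nat) by (apply Rmax_left; lra).
  assert (C1zr : forall s, s <= Rmax (X 0%nat) (- Tm) -> continuous (fun s => Cre (wm s)) s).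
  { intros s Hs. rewrite HmaxM in Hs. apply Ccont_re. apply Hcwm; auto. }
  assert (C2zr : forall s, s <= - Tm -> Rabs ((fun s => Cre (wm s)) s) <= Km / (s * s)).
  { intros s Hs. eapply Rle_trans; [|apply HbM; auto].
    replace (Cre (wm s)) with (Cre (Csub (w 0%nat s) (RtoC k0))) by (unfold wm; simpl; ring).
    apply Cnorm_re. }
  destruct (lim_minf (fun s => Cre (wm s)) (X 0%nat) Tm Km ltac:(lra) C1zr C2zr) as [zr Hzr].
  assert (C1zi : forall s, s <= Rmax (X 0%nat) (- Tm) -> continuous (fun s => Cim (wm s)) s).
  { intros s Hs. rewrite HmaxM in Hs. apply Ccont_im. apply Hcwm; auto. }
  assert (C2zi : forall s, s <= - Tm -> Rabs ((fun s => Cim (wm s)) s) <= Km / (s * s)).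
  { intros s Hs. eapply Rle_trans; [|apply HbM; auto].
    replace (Cim (wm s)) with (Cim (Csub (w 0%nat s) (RtoC k0))) by (unfold wm; simpl; ring).
    apply Cnorm_im. }
  destruct (lim_minf (fun s => Cim (wm s)) (X 0%nat) Tm Km ltac:(lra) C1zi C2zi) as [zi Hzi].
  assert (HLp : Clim (Rbar_locally p_infty) (Fint wt (X N)) (mkC yr yi)) by (split; assumption).
  assert (HLm : Clim (Rbar_locally m_infty) (Fint wm (X 0%nat)) (mkC zr zi)) by (split; assumption).
  pose (Pp := fun t => Cmul (rho N) (Cmul (Cexp (Cneg (Cmul Ci (RtoC (k0 * X N))))) (Cexp (Cneg (Cmul Ci (Fint wt (X N) t)))))).
  pose (Pm := fun t => Cmul (rho 0%nat) (Cmul (Cexp (Cmul Ci (RtoC (k0 * X 0%nat)))) (Cexp (Cneg (Cmul Ci (Fint wm (X 0%nat) t)))))).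
  exists (Cmul (rho N) (Cmul (Cexp (Cneg (Cmul Ci (RtoC (k0 * X N))))) (Cexp (Cneg (Cmul Ci (mkC yr yi)))))).
  exists (Cmul (rho 0%nat) (Cmul (Cexp (Cmul Ci (RtoC (k0 * X 0%nat)))) (Cexp (Cneg (Cmul Ci (mkC zr zi)))))).
  split; [|split; [|split]].
  - apply Cmul_neq0. apply Hrnz; auto. apply Cmul_neq0; apply Cexp_neq0.
  - apply Cmul_neq0. apply Hrnz; lia. apply Cmul_neq0; apply Cexp_neq0.
  - intros eps Heps.
    assert (HP : Clim (Rbar_locally p_infty) Pp (Cmul (rho N) (Cmul (Cexp (Cneg (Cmul Ci (RtoC (k0 * X N))))) (Cexp (Cneg (Cmul Ci (mkC yr yi))))))).
    { unfold Pp. apply Clim_mul. apply Clim_const. apply Clim_mul. apply Clim_const.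
      apply Clim_exp. apply Clim_neg. apply Clim_mul. apply Clim_const. exact HLp. }
    destruct (Clim_norm_1 _ _ HP eps Heps) as [M HM].
    exists (Rmax M (Rmax (x N) (X N))). intros t Ht.
    pose proof (Rmax_l M (Rmax (x N) (X N))). pose proof (Rmax_r M (Rmax (x N) (X N))).
    pose proof (Rmax_l (x N) (X N)). pose proof (Rmax_r (x N) (X N)).
    assert (HtI : inI N x N t) by (apply HinN; lra).
    assert (Hid : psi0 t = Cmul (Cexp (Cmul Ci (RtoC (k0 * t)))) (Pp t)).
    { rewrite (Hpsi' N t) by auto.
      assert (EE : ex_RInt (fun s => Cre (w N s)) (X N) t /\ ex_RInt (fun s => Cim (w N s)) (X N) t).
      { apply (exR_on (inI N x N)); auto. apply inI_cvx. intros s Hs; apply Hcont; auto. }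
      destruct EE as [E1 E2].
      assert (HF : Fint (w N) (X N) t = Csub (Fint wt (X N) t) (RtoC (k0 * (t - X N)))).
      { unfold wt. rewrite Fint_shift by auto. generalize (Fint (w N) (X N) t); intros z. apply Cx_eq; simpl; ring. }
      rewrite HF, exp_arith_p. unfold Pp. apply Cx_eq; simpl; ring. }
    rewrite Hid. apply asym_final. apply norm_eit. apply HM. lra.
  - intros eps Heps.
    assert (HP : Clim (Rbar_locally m_infty) Pm (Cmul (rho 0%nat) (Cmul (Cexp (Cmul Ci (RtoC (k0 * X 0%nat)))) (Cexp (Cneg (Cmul Ci (mkC zr zi))))))).
    { unfold Pm. apply Clim_mul. apply Clim_const. apply Clim_mul. apply Clim_const.
      apply Clim_exp. apply Clim_neg. apply Clim_mul. apply Clim_const. exact HLm. }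
    destruct (Clim_norm_1 _ _ HP eps Heps) as [M HM].
    exists (Rmin M (Rmin (x 1%nat) (X 0%nat))). intros t Ht.
    pose proof (Rmin_l M (Rmin (x 1%nat) (X 0%nat))). pose proof (Rmin_r M (Rmin (x 1%nat) (X 0%nat))).
    pose proof (Rmin_l (x 1%nat) (X 0%nat)). pose proof (Rmin_r (x 1%nat) (X 0%nat)).
    assert (HtI : inI N x 0 t) by (apply Hin0; lra).
    assert (Hid : psi0 t = Cmul (Cexp (Cneg (Cmul Ci (RtoC (k0 * t))))) (Pm t)).
    { rewrite (Hpsi' 0%nat t) by (auto; lia).
      assert (EE : ex_RInt (fun s => Cre (w 0%nat s)) (X 0%nat) t /\ ex_RInt (fun s => Cim (w 0%nat s)) (X 0%nat) t).
      { apply (exR_on (inI N x 0)); auto. apply inI_cvx. intros s Hs; apply Hcont; auto; lia. }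
      destruct EE as [E1 E2].
      assert (HF : Fint (w 0%nat) (X 0%nat) t = Csub (Fint wm (X 0%nat) t) (RtoC (- k0 * (t - X 0%nat)))).
      { unfold wm. rewrite Fint_shift by auto. generalize (Fint (w 0%nat) (X 0%nat) t); intros z. apply Cx_eq; simpl; ring. }
      rewrite HF, exp_arith_m. unfold Pm. apply Cx_eq; simpl; ring. }
    rewrite Hid. apply asym_final. apply norm_emit. apply HM. lra.
Qed.
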